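(* There is $c\in(0,1)$ (depending on $d,\gamma,\chi$) such that for all $N$ $$cN^{d-1-\gamma}\le\mathrm{cap}_\Delta(B)\le c^{-1}N^{d-1-\gamma},$$ and for every $x\in\partial B$, $$cN^{1-d}\le\bar e_B^\Delta(x)\le c^{-1}N^{1-d}.$$
   Context: Let $d\ge3$, $\gamma\in(\frac1{d-1},1)$, $\chi\in(0,\frac14)$. Identify $\mathbb T_N^d$ with $\{0,\dots,N-1\}^d\subset\mathbb Z^d$, both with nearest-neighbour graph structure. $B(x,r)$ is the Euclidean ball of radius $r$ centred at $x$. Let $L=2N^\gamma+\chi N$, $B=B_N=\bigcup_{x\in[L,N-L]^d\cap\mathbb Z^d}B(x,\chi N)$ and $\Delta=\Delta_N=\big(\bigcup_{x\in B}B(x,N^\gamma)\big)^c$, both viewed as subsets of $\mathbb T_N^d$. For $K$, the inner boundary is $\partial K=\{x\in K:\exists y\notin K,|x-y|=1\}$. $P_x$ is the law of simple random walk on $\mathbb T_N^d$ started at $x$; $H_K=\inf\{k\ge0:X_k\in K\}$, $\tilde H_K=\inf\{k\ge1:X_k\in K\}$. Define $\mathrm{cap}_\Delta(B)=\sum_{x\in\partial B}P_x[\tilde H_B>H_\Delta]$ and $\bar e^\Delta_B(x)=\mathbf 1_{x\in\partial B}P_x[\tilde H_B>H_\Delta]/\mathrm{cap}_\Delta(B)$. *)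

(* Defs.v *)
From Stdlib Require Import Reals List ZArith ClassicalEpsilon.
Import ListNotations.
Open Scope R_scope.

(* Points of Z^d (and of T_N^d) are lists of integers of length d. *)
Definition coord (x : list Z) (i : nat) : Z := nth i x 0%Z.

(* Torus T_N^d identified with {0,...,N-1}^d: list of all its points. *)
Fixpoint grid (d N : nat) : list (list Z) :=
  match d with
  | O => [[]]
  | S k => flat_map (fun a => map (cons a) (grid k N))
                    (map Z.of_nat (seq 0 N))
  end.

Definition is_torus_pt (d N : nat) (x : list Z) : Prop := In x (grid d N).

Fixpoint replace_nth (i : nat) (v : Z) (x : list Z) : list Z :=
  match i, x with
  | O, _ :: t => v :: t
  | S j, a :: t => a :: replace_nth j v t
  | _, [] => []
  end.

(* The 2d nearest-neighbour steps on the torus (with multiplicity). *)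
Definition torus_nbrs (d N : nat) (x : list Z) : list (list Z) :=
  flat_map (fun i =>
     map (fun s => replace_nth i (Z.modulo (coord x i + s) (Z.of_nat N)) x)
         [1%Z; (-1)%Z]) (seq 0 d).

Definition Rsum_list {A} (f : A -> R) (l : list A) : R :=
  fold_right (fun a acc => f a + acc) 0 l.

Definition euclid (d : nat) (x y : list Z) : R :=
  sqrt (Rsum_list (fun i => (IZR (coord x i - coord y i)) ^ 2) (seq 0 d)).

Definition in_ball (d : nat) (x : list Z) (r : R) (y : list Z) : Prop :=
  euclid d x y <= r.

Definition Lpar (N : nat) (gam chi : R) : R :=
  2 * Rpower (INR N) gam + chi * INR N.

Definition inB (d N : nat) (gam chi : R) (y : list Z) : Prop :=
  is_torus_pt d N y /\
  exists x : list Z, length x = d /\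
    (forall i, (i < d)%nat ->
       Lpar N gam chi <= IZR (coord x i) <= INR N - Lpar N gam chi) /\
    in_ball d x (chi * INR N) y.

Definition inDelta (d N : nat) (gam chi : R) (y : list Z) : Prop :=
  is_torus_pt d N y /\
  ~ (exists x, inB d N gam chi x /\ in_ball d x (Rpower (INR N) gam) y).

Definition inBdB (d N : nat) (gam chi : R) (x : list Z) : Prop :=
  inB d N gam chi x /\
  exists y, In y (torus_nbrs d N x) /\ ~ inB d N gam chi y.

Definition ind (P : Prop) : R :=
  if excluded_middle_informative P then 1 else 0.

(* q n y = P_y[ exists k <= n, X_k in Delta and X_j notin B for 1 <= j <= k ]
   for simple random walk on T_N^d.  Its increasing limit in n is
   P_y[ tilde H_B > H_Delta ]. *)
Fixpoint esc_approx (d N : nat) (gam chi : R) (n : nat) (y : list Z) : R :=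
  if excluded_middle_informative (inDelta d N gam chi y) then 1 else
  match n with
  | O => 0
  | S m => / (2 * INR d) *
           Rsum_list (fun z => (1 - ind (inB d N gam chi z)) *
                               esc_approx d N gam chi m z)
                     (torus_nbrs d N y)
  end.

(* cap_Delta(B) = sum over x in dB of P_x[tilde H_B > H_Delta], where
   h x = P_x[tilde H_B > H_Delta]. *)
Definition capD (d N : nat) (gam chi : R) (h : list Z -> R) : R :=
  Rsum_list (fun x => ind (inBdB d N gam chi x) * h x) (grid d N).

Definition ebarD (d N : nat) (gam chi : R) (h : list Z -> R) (x : list Z) : R :=
  ind (inBdB d N gam chi x) * h x / capD d N gam chi h.

(* Main.v *)
Require Import Defs.
From Stdlib Require Import Reals List ZArith Lra Lia Psatz ClassicalEpsilon Classical.
Require Import Defs.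
Import ListNotations.
Open Scope R_scope.

Lemma Rsum_nil {A} (f : A -> R) : Rsum_list f [] = 0.
Proof. reflexivity. Qed.
Lemma Rsum_cons {A} (f : A -> R) a l : Rsum_list f (a :: l) = f a + Rsum_list f l.
Proof. reflexivity. Qed.
Lemma Rsum_app {A} (f : A -> R) l1 l2 :
  Rsum_list f (l1 ++ l2) = Rsum_list f l1 + Rsum_list f l2.
Proof. induction l1; simpl; [lra|]. unfold Rsum_list in *; simpl in *. rewrite IHl1. lra. Qed.
Lemma Rsum_ext_in {A} (f g : A -> R) l :
  (forall a, In a l -> f a = g a) -> Rsum_list f l = Rsum_list g l.
Proof. induction l; intros H; [reflexivity|]. rewrite !Rsum_cons. rewrite H by (left; auto).
  rewrite IHl; auto. intros; apply H; right; auto. Qed.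
Lemma Rsum_le_in {A} (f g : A -> R) l :
  (forall a, In a l -> f a <= g a) -> Rsum_list f l <= Rsum_list g l.
Proof. induction l; intros H; [rewrite !Rsum_nil; lra|]. rewrite !Rsum_cons.
  apply Rplus_le_compat; [apply H; left; auto| apply IHl; intros; apply H; right; auto]. Qed.
Lemma Rsum_plus {A} (f g : A -> R) l :
  Rsum_list (fun a => f a + g a) l = Rsum_list f l + Rsum_list g l.
Proof. induction l; [rewrite !Rsum_nil; lra|]. rewrite !Rsum_cons, IHl. lra. Qed.
Lemma Rsum_scal {A} (c : R) (f : A -> R) l :
  Rsum_list (fun a => c * f a) l = c * Rsum_list f l.
Proof. induction l; [rewrite !Rsum_nil; lra|]. rewrite !Rsum_cons, IHl. lra. Qed.
Lemma Rsum_const {A} (c : R) (l : list A) :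
  Rsum_list (fun _ => c) l = INR (length l) * c.
Proof. induction l; [rewrite Rsum_nil; simpl; lra|]. rewrite Rsum_cons, IHl.
  simpl length. rewrite S_INR. lra. Qed.
Lemma Rsum_nonneg {A} (f : A -> R) l :
  (forall a, In a l -> 0 <= f a) -> 0 <= Rsum_list f l.
Proof. intros H. replace 0 with (INR (length l) * 0) by ring.
  rewrite <- Rsum_const. apply Rsum_le_in; auto. Qed.
Lemma Rsum_map {A B} (f : B -> R) (g : A -> B) l :
  Rsum_list f (map g l) = Rsum_list (fun a => f (g a)) l.
Proof. induction l; [reflexivity|]. simpl map. rewrite !Rsum_cons, IHl. reflexivity. Qed.
Lemma Rsum_flat_map {A B} (f : B -> R) (g : A -> list B) l :
  Rsum_list f (flat_map g l) = Rsum_list (fun a => Rsum_list f (g a)) l.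
Proof. induction l; [reflexivity|]. simpl flat_map. rewrite Rsum_app, Rsum_cons, IHl. reflexivity. Qed.
Lemma Rsum_swap {A B} (F : A -> B -> R) l1 l2 :
  Rsum_list (fun a => Rsum_list (fun b => F a b) l2) l1 =
  Rsum_list (fun b => Rsum_list (fun a => F a b) l1) l2.
Proof. induction l1.
  - rewrite Rsum_nil. symmetry. rewrite <- (Rmult_0_r (INR (length l2))), <- Rsum_const.
    apply Rsum_ext_in. intros; reflexivity.
  - rewrite Rsum_cons, IHl1. rewrite <- Rsum_plus. apply Rsum_ext_in. intros; reflexivity. Qed.
Lemma Rsum_ge_elem {A} (f : A -> R) l a0 :
  (forall a, In a l -> 0 <= f a) -> In a0 l -> f a0 <= Rsum_list f l.
Proof. induction l; intros H Hin; [destruct Hin|]. rewrite Rsum_cons. destruct Hin as [->|Hin].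
  - assert (0 <= Rsum_list f l) by (apply Rsum_nonneg; intros; apply H; right; auto). lra.
  - assert (0 <= f a) by (apply H; left; auto). assert (f a0 <= Rsum_list f l) by
      (apply IHl; auto; intros; apply H; right; auto). lra. Qed.
Lemma Rsum_update (F F' : nat -> R) l i :
  NoDup l -> In i l -> (forall j, j <> i -> F' j = F j) ->
  Rsum_list F' l = Rsum_list F l + (F' i - F i).
Proof. induction l; intros Hnd Hin H; [destruct Hin|]. inversion Hnd; subst.
  rewrite !Rsum_cons. destruct (Nat.eq_dec a i) as [->|Hne].
  - rewrite (Rsum_ext_in F' F l). lra. intros j Hj. apply H. intros ->; contradiction.
  - destruct Hin as [->|Hin]; [congruence|]. rewrite IHl; auto. rewrite H; auto. lra. Qed.

Lemma ind_true (P : Prop) : P -> ind P = 1.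
Proof. intros H; unfold ind; destruct (excluded_middle_informative P); tauto. Qed.
Lemma ind_false (P : Prop) : ~ P -> ind P = 0.
Proof. intros H; unfold ind; destruct (excluded_middle_informative P); tauto. Qed.
Lemma ind_01 (P : Prop) : 0 <= ind P <= 1.
Proof. unfold ind; destruct (excluded_middle_informative P); lra. Qed.
Lemma ind_imp (P Q : Prop) : (P -> Q) -> ind P <= ind Q.
Proof. intros H; unfold ind; destruct (excluded_middle_informative P);
  destruct (excluded_middle_informative Q); try lra; tauto. Qed.

Lemma ind_le_sum {A} (P : Prop) (Q : A -> Prop) l :
  (P -> exists a, In a l /\ Q a) -> ind P <= Rsum_list (fun a => ind (Q a)) l.
Proof. intros H. destruct (classic P) as [HP|HP].
  - destruct (H HP) as [a [Ha HQ]]. rewrite ind_true by auto.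
    rewrite <- (ind_true (Q a)) by auto. apply Rsum_ge_elem with (f := fun a => ind (Q a)); auto.
    intros; apply ind_01.
  - rewrite ind_false by auto. apply Rsum_nonneg. intros; apply ind_01. Qed.

Lemma sum_ind_unique {A} (P : A -> Prop) l :
  NoDup l -> (forall a b, In a l -> In b l -> P a -> P b -> a = b) ->
  Rsum_list (fun a => ind (P a)) l <= 1.
Proof. induction l; intros Hnd H; [rewrite Rsum_nil; lra|]. inversion Hnd; subst.
  rewrite Rsum_cons. destruct (classic (P a)) as [Ha|Ha].
  - rewrite ind_true by auto. rewrite (Rsum_ext_in _ (fun _ => 0)).
    rewrite Rsum_const. lra. intros b Hb. apply ind_false. intros Hpb.
    assert (a = b) by (apply H; simpl; auto). subst; contradiction.
  - rewrite ind_false by auto. assert (Rsum_list (fun a => ind (P a)) l <= 1).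
    apply IHl; auto. intros; apply H; simpl; auto. lra. Qed.

Lemma coord_cons0 a t : coord (a :: t) 0 = a.
Proof. reflexivity. Qed.
Lemma coord_consS a t j : coord (a :: t) (S j) = coord t j.
Proof. reflexivity. Qed.

Lemma grid_spec d N x :
  In x (grid d N) <-> (length x = d /\ forall j, (j < d)%nat -> (0 <= coord x j < Z.of_nat N)%Z).
Proof.
  revert x; induction d; intros x; simpl.
  - split. intros [<-|[]]. split; auto; intros; lia.
    intros [Hl _]. destruct x; simpl in Hl; [auto|lia].
  - rewrite in_flat_map. split.
    + intros [a [Ha Hx]]. apply in_map_iff in Ha. destruct Ha as [n [<- Hn]].
      apply in_seq in Hn. apply in_map_iff in Hx. destruct Hx as [t [<- Ht]].
      apply IHd in Ht. destruct Ht as [Hl Ht]. split; [simpl; auto|].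
      intros [|j] Hj. rewrite coord_cons0. lia. rewrite coord_consS. apply Ht. lia.
    + intros [Hl Hc]. destruct x as [|a t]; simpl in Hl; [lia|].
      exists a. split.
      * apply in_map_iff. exists (Z.to_nat a). specialize (Hc 0%nat ltac:(lia)).
        rewrite coord_cons0 in Hc. split; [lia|]. apply in_seq. lia.
      * apply in_map. apply IHd. split; [lia|]. intros j Hj.
        specialize (Hc (S j) ltac:(lia)). rewrite coord_consS in Hc. auto.
Qed.

Lemma length_replace i v x : length (replace_nth i v x) = length x.
Proof. revert i; induction x; intros [|i]; simpl; auto. Qed.
Lemma coord_replace_same i v x : (i < length x)%nat -> coord (replace_nth i v x) i = v.
Proof. revert i; induction x; intros [|i] H; simpl in *; try lia; auto.
  apply IHx; lia. Qed.
Lemma coord_replace_other i j v x : j <> i -> coord (replace_nth i v x) j = coord x j.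
Proof. revert i j; induction x; intros [|i] [|j] H; simpl; auto; try congruence.
  unfold coord; simpl. apply IHx. lia. Qed.

Lemma replace_nth_eq x i : (i < length x)%nat -> replace_nth i (coord x i) x = x.
Proof. revert i; induction x; intros [|i] H; simpl in *; try lia; auto.
  f_equal. apply IHx. lia. Qed.

Lemma list_coord_ext (x y : list Z) :
  length x = length y -> (forall j, coord x j = coord y j) -> x = y.
Proof. revert y; induction x; intros [|b y] Hl H; simpl in *; try lia; auto.
  f_equal. apply (H 0%nat). apply IHx; [lia|]. intros j; apply (H (S j)). Qed.

Lemma torus_nbrs_eq d N x :
  torus_nbrs d N x = flat_map (fun i =>
     [replace_nth i ((coord x i + 1) mod Z.of_nat N)%Z x;
      replace_nth i ((coord x i + -1) mod Z.of_nat N)%Z x]) (seq 0 d).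
Proof. reflexivity. Qed.

Lemma length_torus_nbrs d N x : length (torus_nbrs d N x) = (2 * d)%nat.
Proof. rewrite torus_nbrs_eq.
  assert (H : forall s, length (flat_map (fun i =>
     [replace_nth i ((coord x i + 1) mod Z.of_nat N)%Z x;
      replace_nth i ((coord x i + -1) mod Z.of_nat N)%Z x]) (seq s d)) = (2 * d)%nat).
  { induction d; intros s; [reflexivity|].
  cbn [seq flat_map]. rewrite length_app, IHd. simpl. lia. }
  apply H. Qed.

Lemma in_torus_nbrs d N x y :
  In y (torus_nbrs d N x) <-> exists i s, (i < d)%nat /\ (s = 1 \/ s = -1)%Z /\
     y = replace_nth i ((coord x i + s) mod Z.of_nat N)%Z x.
Proof. rewrite torus_nbrs_eq, in_flat_map. split.
  - intros [i [Hi Hy]]. apply in_seq in Hi. simpl in Hy.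
    destruct Hy as [<-|[<-|[]]]; [exists i, 1%Z|exists i, (-1)%Z]; repeat split; auto; lia.
  - intros [i [s [Hi [Hs ->]]]]. exists i. split. apply in_seq; lia.
    destruct Hs as [->| ->]; simpl; auto. Qed.

Lemma nbr_in_grid d N x y : (0 < N)%nat -> In x (grid d N) -> In y (torus_nbrs d N x) ->
  In y (grid d N).
Proof. intros HN Hx Hy. apply grid_spec in Hx. destruct Hx as [Hl Hc].
  apply in_torus_nbrs in Hy. destruct Hy as [i [s [Hi [Hs ->]]]].
  apply grid_spec. split. rewrite length_replace; auto.
  intros j Hj. destruct (Nat.eq_dec j i) as [->|Hne].
  - rewrite coord_replace_same by lia. apply Z.mod_pos_bound. lia.
  - rewrite coord_replace_other by auto. auto. Qed.

(* interior points: no wrap *)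
Definition interior d N x := forall j, (j < d)%nat -> (1 <= coord x j <= Z.of_nat N - 2)%Z.

Lemma Rsum_nbrs_interior d N x (f : list Z -> R) :
  interior d N x ->
  Rsum_list f (torus_nbrs d N x) =
  Rsum_list (fun i => f (replace_nth i (coord x i + 1)%Z x) +
                      f (replace_nth i (coord x i - 1)%Z x)) (seq 0 d).
Proof. intros H. rewrite torus_nbrs_eq, Rsum_flat_map. apply Rsum_ext_in.
  intros i Hi. apply in_seq in Hi. specialize (H i ltac:(lia)).
  rewrite !Rsum_cons, Rsum_nil. rewrite !Z.mod_small by lia.
  replace (coord x i + -1)%Z with (coord x i - 1)%Z by lia. ring. Qed.

Lemma NoDup_Zseq N : NoDup (map Z.of_nat (seq 0 N)).
Proof. apply NoDup_map_NoDup_ForallPairs. intros a b _ _ H; lia. apply seq_NoDup. Qed.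

Lemma esc_Delta d N gam chi n y : inDelta d N gam chi y -> esc_approx d N gam chi n y = 1.
Proof. intros H. destruct n; simpl; destruct (excluded_middle_informative _); tauto. Qed.
Lemma esc_O d N gam chi y : ~ inDelta d N gam chi y -> esc_approx d N gam chi 0 y = 0.
Proof. intros H. simpl; destruct (excluded_middle_informative _); tauto. Qed.
Lemma esc_S d N gam chi m y : ~ inDelta d N gam chi y ->
  esc_approx d N gam chi (S m) y = / (2 * INR d) *
    Rsum_list (fun z => (1 - ind (inB d N gam chi z)) * esc_approx d N gam chi m z)
              (torus_nbrs d N y).
Proof. intros H. simpl; destruct (excluded_middle_informative _); tauto. Qed.

Lemma esc_bounds d N gam chi n y : (0 < d)%nat -> 0 <= esc_approx d N gam chi n y <= 1.
Proof. intros Hd. revert y; induction n; intros y.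
  - destruct (classic (inDelta d N gam chi y)).
    rewrite esc_Delta; auto; lra. rewrite esc_O; auto; lra.
  - destruct (classic (inDelta d N gam chi y)).
    rewrite esc_Delta; auto; lra. rewrite esc_S; auto.
    assert (Hd' : 0 < INR d) by (apply lt_0_INR; lia).
    set (S0 := Rsum_list _ _).
    assert (0 <= S0 <= 2 * INR d).
    { split.
      - apply Rsum_nonneg. intros a _. pose proof (ind_01 (inB d N gam chi a)).
        specialize (IHn a). nra.
      - replace (2 * INR d) with (INR (length (torus_nbrs d N y)) * 1).
        rewrite <- Rsum_const. apply Rsum_le_in. intros a _.
        pose proof (ind_01 (inB d N gam chi a)). specialize (IHn a). nra.
        rewrite length_torus_nbrs, mult_INR. simpl. lra. }
    split. apply Rmult_le_pos; [left; apply Rinv_0_lt_compat; lra| lra].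
    apply (Rmult_le_reg_l (2 * INR d)); [lra|]. rewrite <- Rmult_assoc, Rinv_r by lra. lra.
Qed.

Lemma cv_le u l M : Un_cv u l -> (forall n, u n <= M) -> l <= M.
Proof. intros Hc Hm. destruct (Rle_dec l M) as [|Hn]; auto. exfalso.
  destruct (Hc (l - M)) as [n0 Hn0]. lra. specialize (Hn0 n0 (le_n _)). specialize (Hm n0).
  unfold Rdist in Hn0. apply Rabs_def2 in Hn0. lra. Qed.
Lemma cv_ge u l M : Un_cv u l -> (forall n, M <= u n) -> M <= l.
Proof. intros Hc Hm. destruct (Rle_dec M l) as [|Hn]; auto. exfalso.
  destruct (Hc (M - l)) as [n0 Hn0]. lra. specialize (Hn0 n0 (le_n _)). specialize (Hm n0).
  unfold Rdist in Hn0. apply Rabs_def2 in Hn0. lra. Qed.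
Lemma cv_le_S u l M : Un_cv u l -> (forall n, u (S n) <= M) -> l <= M.
Proof. intros Hc Hm. apply (cv_le (fun n => u (n + 1)%nat)). apply CV_shift'; auto.
  intros n. rewrite Nat.add_1_r. auto. Qed.
Lemma cv_ge_S u l M : Un_cv u l -> (forall n, M <= u (S n)) -> M <= l.
Proof. intros Hc Hm. apply (cv_ge (fun n => u (n + 1)%nat)). apply CV_shift'; auto.
  intros n. rewrite Nat.add_1_r. auto. Qed.

Lemma cv_const c : Un_cv (fun _ => c) c.
Proof. intros e He. exists 0%nat. intros. unfold Rdist. rewrite Rminus_diag, Rabs_R0. auto. Qed.

Lemma cv_sum {A} (s : nat -> A -> R) (h : A -> R) (f : A -> R) l :
  (forall a, In a l -> Un_cv (fun n => s n a) (h a)) ->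
  Un_cv (fun n => Rsum_list (fun a => f a * s n a) l) (Rsum_list (fun a => f a * h a) l).
Proof. induction l; intros H.
  - rewrite Rsum_nil. apply (Un_cv_ext (fun _ => 0)); [reflexivity|apply cv_const].
  - rewrite Rsum_cons. apply (Un_cv_ext (fun n => f a * s n a + Rsum_list (fun a => f a * s n a) l)).
    intros; reflexivity. apply CV_plus. apply CV_mult. apply cv_const. apply H; left; auto.
    apply IHl. intros; apply H; right; auto. Qed.

Section H.
Variables (d N : nat) (gam chi : R) (h : list Z -> R).
Hypothesis Hd : (0 < d)%nat.
Hypothesis HN : (0 < N)%nat.
Hypothesis Hh : forall x, In x (grid d N) -> Un_cv (fun n => esc_approx d N gam chi n x) (h x).

Lemma h_bounds x : In x (grid d N) -> 0 <= h x <= 1.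
Proof. intros Hx. split. apply (cv_ge _ _ _ (Hh x Hx)). intros n; apply esc_bounds; auto.
  apply (cv_le _ _ _ (Hh x Hx)). intros n; apply esc_bounds; auto. Qed.

Lemma h_Delta x : In x (grid d N) -> inDelta d N gam chi x -> h x = 1.
Proof. intros Hx HD. apply (UL_sequence _ _ _ (Hh x Hx)).
  apply (Un_cv_ext (fun _ => 1)); [|apply cv_const]. intros n; simpl. rewrite esc_Delta; auto. Qed.

Lemma h_harm x : In x (grid d N) -> ~ inDelta d N gam chi x ->
  h x = / (2 * INR d) * Rsum_list (fun z => (1 - ind (inB d N gam chi z)) * h z)
                                  (torus_nbrs d N x).
Proof. intros Hx HD. apply (UL_sequence (fun n => esc_approx d N gam chi (n + 1) x)).
  apply (CV_shift' (fun n => esc_approx d N gam chi n x) 1%nat (h x)). apply Hh; auto.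
  apply (Un_cv_ext (fun n => / (2 * INR d) * Rsum_list (fun z => (1 - ind (inB d N gam chi z)) *
     esc_approx d N gam chi n z) (torus_nbrs d N x))).
  intros n. rewrite Nat.add_1_r. rewrite esc_S by auto. reflexivity.
  apply CV_mult. apply cv_const. apply cv_sum. intros a Ha. apply Hh.
  eapply nbr_in_grid; eauto. Qed.
End H.

Lemma grid_S k N : grid (S k) N =
  flat_map (fun a => map (cons a) (grid k N)) (map Z.of_nat (seq 0 N)).
Proof. reflexivity. Qed.

Lemma Rsum_grid_S k N (F : list Z -> R) :
  Rsum_list F (grid (S k) N) =
  Rsum_list (fun a => Rsum_list (fun t => F (a :: t)) (grid k N)) (map Z.of_nat (seq 0 N)).
Proof. rewrite grid_S, Rsum_flat_map. apply Rsum_ext_in. intros. rewrite Rsum_map. reflexivity. Qed.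

Lemma length_Zseq N : length (map Z.of_nat (seq 0 N)) = N.
Proof. rewrite length_map, length_seq. auto. Qed.

Lemma grid_count k N : Rsum_list (fun _ => 1) (grid k N) = INR N ^ k.
Proof. induction k. simpl. lra. rewrite Rsum_grid_S.
  rewrite (Rsum_ext_in _ (fun _ => INR N ^ k)) by (intros; apply IHk).
  rewrite Rsum_const, length_Zseq. simpl. ring. Qed.

Lemma count_unique k N i (Q : list Z -> Prop) : (i < k)%nat ->
  (forall x x', In x (grid k N) -> In x' (grid k N) -> Q x -> Q x' ->
     (forall j, j <> i -> coord x j = coord x' j) -> x = x') ->
  Rsum_list (fun x => ind (Q x)) (grid k N) <= INR N ^ (k - 1).
Proof. revert i Q; induction k; intros i Q Hi HU; [lia|]. rewrite Rsum_grid_S.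
  destruct i as [|i'].
  - rewrite Rsum_swap. replace (S k - 1)%nat with k by lia. rewrite <- grid_count.
    apply Rsum_le_in. intros t Ht. apply sum_ind_unique. apply NoDup_Zseq.
    intros a b Ha Hb Hqa Hqb. apply in_map_iff in Ha as [na [<- Hna]].
    apply in_map_iff in Hb as [nb [<- Hnb]]. apply in_seq in Hna, Hnb.
    assert (E : Z.of_nat na :: t = Z.of_nat nb :: t).
    { apply HU; auto.
      - apply grid_spec. apply grid_spec in Ht as [Hl Hc]. split; simpl; auto.
        intros [|j] Hj; [rewrite coord_cons0; lia|rewrite coord_consS; apply Hc; lia].
      - apply grid_spec. apply grid_spec in Ht as [Hl Hc]. split; simpl; auto.
        intros [|j] Hj; [rewrite coord_cons0; lia|rewrite coord_consS; apply Hc; lia].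
      - intros [|j] Hj; [lia|reflexivity]. }
    inversion E; auto.
  - replace (S k - 1)%nat with (S (k - 1)) by lia. rewrite <- tech_pow_Rmult.
    replace (INR N * INR N ^ (k-1)) with (Rsum_list (fun _ => INR N ^ (k-1)) (map Z.of_nat (seq 0 N)))
      by (rewrite Rsum_const, length_Zseq; ring). apply Rsum_le_in.
    intros a Ha. apply (IHk i' (fun t => Q (a :: t))). lia.
    intros x x' Hx Hx' Hq Hq' Hc.
    assert (E : a :: x = a :: x').
    { apply HU; auto.
      - apply in_map_iff in Ha as [na [<- Hna]]. apply in_seq in Hna.
        apply grid_spec. apply grid_spec in Hx as [Hl Hcc]. split; simpl; auto.
        intros [|j] Hj; [rewrite coord_cons0; lia|rewrite coord_consS; apply Hcc; lia].
      - apply in_map_iff in Ha as [na [<- Hna]]. apply in_seq in Hna.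
        apply grid_spec. apply grid_spec in Hx' as [Hl Hcc]. split; simpl; auto.
        intros [|j] Hj; [rewrite coord_cons0; lia|rewrite coord_consS; apply Hcc; lia].
      - intros [|j] Hj; [reflexivity|]. rewrite !coord_consS. apply Hc. lia. }
    inversion E; auto.
Qed.

Lemma count_interval (lo hi : Z) n : (0 <= lo)%Z ->
  Rsum_list (fun a => ind (lo <= a <= hi)%Z) (map Z.of_nat (seq 0 n)) =
  IZR (Z.max 0 (Z.min hi (Z.of_nat n - 1) - lo + 1)).
Proof. intros Hlo. induction n. simpl. f_equal. lia.
  rewrite seq_S, map_app, Rsum_app, IHn. simpl map. rewrite Rsum_cons, Rsum_nil.
  destruct (classic (lo <= Z.of_nat n <= hi)%Z).
  - rewrite ind_true by auto. rewrite Rplus_0_r, <- plus_IZR. f_equal. lia.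
  - rewrite ind_false by auto. rewrite !Rplus_0_r. f_equal. lia. Qed.

Lemma count_box k N (lo hi : Z) : (0 <= lo)%Z -> (lo <= hi)%Z -> (hi < Z.of_nat N)%Z ->
  Rsum_list (fun t => ind (forall j, (j < k)%nat -> (lo <= coord t j <= hi)%Z)) (grid k N) =
  IZR (hi - lo + 1) ^ k.
Proof. intros H1 H2 H3. induction k.
  - simpl. unfold Rsum_list; simpl. rewrite ind_true. lra. intros; lia.
  - rewrite Rsum_grid_S.
    rewrite (Rsum_ext_in _ (fun a => ind (lo <= a <= hi)%Z * IZR (hi - lo + 1) ^ k)).
    + rewrite (Rsum_ext_in _ (fun a => IZR (hi - lo + 1) ^ k * ind (lo <= a <= hi)%Z))
        by (intros; ring).
      rewrite Rsum_scal, count_interval by auto. simpl. rewrite Rmult_comm. f_equal. f_equal. lia.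
    + intros a Ha. rewrite <- IHk, <- Rsum_scal. apply Rsum_ext_in. intros t Ht.
      destruct (classic (lo <= a <= hi)%Z) as [Ha'|Ha'].
      * rewrite (ind_true (lo <= a <= hi)%Z) by auto. rewrite Rmult_1_l.
        apply Rle_antisym; apply ind_imp.
        -- intros H j Hj. apply (H (S j)). lia.
        -- intros H [|j] Hj. rewrite coord_cons0; auto. rewrite coord_consS; apply H; lia.
      * rewrite (ind_false (lo <= a <= hi)%Z) by auto. rewrite Rmult_0_l. apply ind_false.
        intros H. apply Ha'. apply (H 0%nat). lia.
Qed.

Lemma CS_sum (a b : nat -> R) l A Bm : 0 < A -> 0 < Bm ->
  Rsum_list (fun j => a j ^ 2) l <= A ^ 2 -> Rsum_list (fun j => b j ^ 2) l <= Bm ^ 2 ->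
  Rsum_list (fun j => a j * b j) l <= A * Bm.
Proof. intros HA HB Ha Hb. set (lam := Bm / A).
  assert (Hlam : 0 < lam) by (unfold lam; apply Rdiv_lt_0_compat; auto).
  apply Rle_trans with (Rsum_list (fun j => (lam * a j ^ 2 + b j ^ 2 / lam) / 2) l).
  - apply Rsum_le_in. intros j _. apply (Rmult_le_reg_l (2 * lam)). lra.
    replace (2 * lam * ((lam * a j ^ 2 + b j ^ 2 / lam) / 2)) with ((lam * a j) ^ 2 + b j ^ 2)
      by (field; lra). pose proof (pow2_ge_0 (lam * a j - b j)). simpl in *. nra.
  - rewrite (Rsum_ext_in _ (fun j => (lam / 2) * a j ^ 2 + (/ (2 * lam)) * b j ^ 2))
      by (intros; field; lra).
    rewrite Rsum_plus, !Rsum_scal.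
    assert (lam / 2 * Rsum_list (fun j => a j ^ 2) l <= lam / 2 * A ^ 2) by
      (apply Rmult_le_compat_l; lra).
    assert (/ (2 * lam) * Rsum_list (fun j => b j ^ 2) l <= / (2 * lam) * Bm ^ 2).
    { apply Rmult_le_compat_l; auto. left; apply Rinv_0_lt_compat; lra. }
    replace (A * Bm) with (lam / 2 * A ^ 2 + / (2 * lam) * Bm ^ 2) by (unfold lam; field; lra).
    lra. Qed.

Lemma finite_min {A} (l : list A) (P : A -> Prop) (F : A -> R) a0 :
  In a0 l -> P a0 -> exists am, In am l /\ P am /\ forall a, In a l -> P a -> F am <= F a.
Proof. revert a0; induction l; intros a0 Hin HP; [destruct Hin|].
  destruct (classic (exists b, In b l /\ P b)) as [[b [Hb Pb]]|Hn].
  - destruct (IHl b Hb Pb) as [am [H1 [H2 H3]]].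
    destruct (classic (P a /\ F a < F am)) as [[Pa Ha]|Hn].
    + exists a. split; [left; auto|]. split; auto. intros c [<-|Hc] Pc. lra.
      specialize (H3 c Hc Pc). lra.
    + exists am. split; [right; auto|]. split; auto. intros c Hc Pc. destruct Hc as [Hc|Hc].
      * subst c. destruct (Rle_dec (F am) (F a)); auto. exfalso; apply Hn; split; auto; lra.
      * auto.
  - destruct Hin as [Hin|Hin]; [subst a0|exfalso; apply Hn; exists a0; auto].
    exists a. split; [left; auto|]. split; auto. intros c Hc Pc. destruct Hc as [Hc|Hc].
    subst; lra. exfalso; apply Hn; exists c; auto. Qed.

Lemma Rsum_one_big {A} (G : A -> R) l a m :
  In a l -> (forall b, In b l -> m <= G b) ->
  G a - m + INR (length l) * m <= Rsum_list G l.
Proof. induction l; intros Hin H; [destruct Hin|]. rewrite Rsum_cons. simpl length.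
  rewrite S_INR. destruct Hin as [<-|Hin].
  - assert (INR (length l) * m <= Rsum_list G l).
    { rewrite <- Rsum_const. apply Rsum_le_in. intros; apply H; right; auto. }
    lra.
  - assert (G a - m + INR (length l) * m <= Rsum_list G l) by
      (apply IHl; auto; intros; apply H; right; auto).
    assert (m <= G a0) by (apply H; left; auto). lra. Qed.

Lemma Rsum_minus {A} (f g : A -> R) l :
  Rsum_list f l - Rsum_list g l = Rsum_list (fun a => f a - g a) l.
Proof. induction l; [rewrite !Rsum_nil; lra|]. rewrite !Rsum_cons. rewrite <- IHl. lra. Qed.

Lemma Rsum_lt_in {A} (f g : A -> R) l : l <> [] ->
  (forall a, In a l -> f a < g a) -> Rsum_list f l < Rsum_list g l.
Proof. induction l; intros Hne H; [congruence|]. rewrite !Rsum_cons. destruct l.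
  - rewrite !Rsum_nil. specialize (H a (or_introl eq_refl)). lra.
  - assert (Rsum_list f (a0 :: l) < Rsum_list g (a0 :: l)).
    apply IHl. discriminate. intros; apply H; right; auto.
    specialize (H a (or_introl eq_refl)). lra. Qed.

Lemma step_bound (rho rho' A b : R) : 1 <= rho -> 0 <= rho' -> rho' <= rho + 1 -> 0 <= A -> 0 <= b ->
  A * (rho' - rho) - b * (rho' - rho) ^ 2 <=
  A * ((rho' ^ 2 - rho ^ 2) / (2 * rho)) - b * ((rho' ^ 2 - rho ^ 2) ^ 2 / (9 * rho ^ 2)).
Proof. intros H1 H2 H3 HA Hb.
  assert (P1 : rho' - rho <= (rho' ^ 2 - rho ^ 2) / (2 * rho)).
  { apply (Rmult_le_reg_l (2 * rho)). lra. unfold Rdiv.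
    replace (2 * rho * ((rho' ^ 2 - rho ^ 2) * / (2 * rho))) with (rho' ^ 2 - rho ^ 2) by (field; lra).
    pose proof (pow2_ge_0 (rho' - rho)). simpl in *. nra. }
  assert (P2 : (rho' ^ 2 - rho ^ 2) ^ 2 / (9 * rho ^ 2) <= (rho' - rho) ^ 2).
  { apply (Rmult_le_reg_l (9 * rho ^ 2)). simpl; nra. unfold Rdiv.
    replace (9 * rho ^ 2 * ((rho' ^ 2 - rho ^ 2) ^ 2 * / (9 * rho ^ 2))) with ((rho' ^ 2 - rho ^ 2) ^ 2)
      by (field; lra).
    replace ((rho' ^ 2 - rho ^ 2) ^ 2) with ((rho' - rho) ^ 2 * (rho' + rho) ^ 2) by ring.
    assert ((rho' + rho) ^ 2 <= 9 * rho ^ 2) by (simpl; nra).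
    assert (0 <= (rho' - rho) ^ 2) by apply pow2_ge_0. nra. }
  assert (A * (rho' - rho) <= A * ((rho' ^ 2 - rho ^ 2) / (2 * rho))) by (apply Rmult_le_compat_l; auto).
  assert (b * ((rho' ^ 2 - rho ^ 2) ^ 2 / (9 * rho ^ 2)) <= b * (rho' - rho) ^ 2)
    by (apply Rmult_le_compat_l; auto).
  lra. Qed.

Lemma pair_bound (rho v rp rm A b : R) : 1 <= rho -> v ^ 2 <= rho ^ 2 -> 0 <= rp -> 0 <= rm ->
  rp ^ 2 = rho ^ 2 + 2 * v + 1 -> rm ^ 2 = rho ^ 2 - 2 * v + 1 -> 0 <= A -> 0 <= b ->
  (A * (rp - rho) - b * (rp - rho) ^ 2) + (A * (rm - rho) - b * (rm - rho) ^ 2) <=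
  A / rho - 8 * b * v ^ 2 / (9 * rho ^ 2).
Proof. intros H1 Hv Hp Hm Ep Em HA Hb.
  assert (Hvr : - rho <= v <= rho) by (simpl in Hv; split; nra).
  assert (Hrp : rp <= rho + 1) by (simpl in Ep; nra).
  assert (Hrm : rm <= rho + 1) by (simpl in Em; nra).
  pose proof (step_bound rho rp A b H1 Hp Hrp HA Hb) as S1.
  pose proof (step_bound rho rm A b H1 Hm Hrm HA Hb) as S2.
  rewrite Ep in S1. rewrite Em in S2.
  replace (rho ^ 2 + 2 * v + 1 - rho ^ 2) with (2 * v + 1) in S1 by ring.
  replace (rho ^ 2 - 2 * v + 1 - rho ^ 2) with (- 2 * v + 1) in S2 by ring.
  assert (E : A * ((2 * v + 1) / (2 * rho)) - b * ((2 * v + 1) ^ 2 / (9 * rho ^ 2)) +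
              (A * ((- 2 * v + 1) / (2 * rho)) - b * ((- 2 * v + 1) ^ 2 / (9 * rho ^ 2))) =
              A / rho - 8 * b * v ^ 2 / (9 * rho ^ 2) - 2 * b / (9 * rho ^ 2)) by (field; lra).
  assert (0 <= 2 * b / (9 * rho ^ 2)).
  { unfold Rdiv. apply Rmult_le_pos. lra. left. apply Rinv_0_lt_compat. simpl; nra. }
  lra. Qed.

Definition sqd d (x y : list Z) := Rsum_list (fun i => (IZR (coord x i - coord y i)) ^ 2) (seq 0 d).

Lemma sqd_nonneg d x y : 0 <= sqd d x y.
Proof. apply Rsum_nonneg. intros; apply pow2_ge_0. Qed.
Lemma euclid_sqd d x y : euclid d x y = sqrt (sqd d x y).
Proof. reflexivity. Qed.
Lemma euclid_le_iff d x y r : 0 <= r -> (euclid d x y <= r <-> sqd d x y <= r ^ 2).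
Proof. intros Hr. rewrite euclid_sqd. pose proof (sqd_nonneg d x y) as H0. split; intros H.
  - assert (H1 : sqrt (sqd d x y) ^ 2 <= r ^ 2). { apply pow_incr. split; auto. apply sqrt_pos. }
    rewrite pow2_sqrt in H1 by auto. lra.
  - rewrite <- (sqrt_pow2 r) by auto. apply sqrt_le_1_alt. auto. Qed.
Lemma sqd_sym d x y : sqd d x y = sqd d y x.
Proof. apply Rsum_ext_in. intros. rewrite <- Z_R_minus, <- Z_R_minus. ring. Qed.
Lemma euclid_sym d x y : euclid d x y = euclid d y x.
Proof. rewrite !euclid_sqd, sqd_sym. auto. Qed.
Lemma sqd_coord d x y j : (j < d)%nat -> (IZR (coord x j - coord y j)) ^ 2 <= sqd d x y.
Proof. intros Hj. apply (Rsum_ge_elem (fun i => (IZR (coord x i - coord y i)) ^ 2)).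
  intros; apply pow2_ge_0. apply in_seq; lia. Qed.
Lemma sqd_self d x : sqd d x x = 0.
Proof. unfold sqd. rewrite (Rsum_ext_in _ (fun _ => 0)). rewrite Rsum_const; ring.
  intros. rewrite Z.sub_diag. simpl; ring. Qed.

Lemma coord_map (f : Z -> Z) y i : (i < length y)%nat -> coord (map f y) i = f (coord y i).
Proof. revert i; induction y; intros [|i] H; simpl in *; try lia; auto.
  unfold coord in *; simpl. apply IHy; lia. Qed.

Lemma ceil_ex (x : R) : exists z : Z, IZR z - 1 < x <= IZR z.
Proof. destruct (archimed x) as [H1 H2]. destruct (Req_dec (IZR (up x) - 1) x) as [He|He].
  - exists (up x - 1)%Z. rewrite minus_IZR. lra.
  - exists (up x). lra. Qed.
Lemma floor_ex (x : R) : exists z : Z, IZR z <= x < IZR z + 1.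
Proof. destruct (ceil_ex (- x)) as [z Hz]. exists (- z)%Z. rewrite opp_IZR. lra. Qed.

Lemma sq_le_bounds a b : 0 <= b -> a ^ 2 <= b ^ 2 -> - b <= a <= b.
Proof. intros Hb H. simpl in H. split; nra. Qed.

Section Geo.
Variables (d N : nat) (gam chi : R) (lo hi : Z).
Let p := Rpower (INR N) gam.
Let r := chi * INR N.
Let L := Lpar N gam chi.
Hypothesis Hd : (0 < d)%nat.
Hypothesis HN : (0 < N)%nat.
Hypothesis Hr : 0 < r.
Hypothesis Hp : 2 < p.
Hypothesis HL : L = 2 * p + r.
Hypothesis Hlo : forall c : Z, L <= IZR c <-> (lo <= c)%Z.
Hypothesis Hhi : forall c : Z, IZR c <= INR N - L <-> (c <= hi)%Z.
Hypothesis Hlohi : (lo <= hi)%Z.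

Definition clamp t := Z.max lo (Z.min hi t).
Definition cen (y : list Z) := map clamp y.
Definition fR (t : Z) := (IZR (t - clamp t)) ^ 2.
Definition Bsum (y : list Z) := Rsum_list (fun j => fR (coord y j)) (seq 0 d).

Lemma clamp_range t : (lo <= clamp t <= hi)%Z.
Proof. unfold clamp; lia. Qed.

Lemma clamp_best t c : (lo <= c <= hi)%Z -> fR t <= (IZR (c - t)) ^ 2.
Proof. intros Hc. unfold fR. rewrite <- !Rsqr_pow2. apply Rsqr_le_abs_1.
  rewrite <- !abs_IZR. apply IZR_le. unfold clamp; lia. Qed.

Lemma clamp_proj t c : (lo <= c <= hi)%Z -> ((t - clamp t) * (c - clamp t) <= 0)%Z.
Proof. intros Hc. unfold clamp. destruct (Z.le_gt_cases t lo); destruct (Z.le_gt_cases t hi);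
  try (rewrite Z.min_r by lia); try (rewrite Z.min_l by lia); nia. Qed.

Definition valid_center (x : list Z) := length x = d /\
  forall i, (i < d)%nat -> Lpar N gam chi <= IZR (coord x i) <= INR N - Lpar N gam chi.

Lemma valid_center_coord x i : valid_center x -> (i < d)%nat -> (lo <= coord x i <= hi)%Z.
Proof. intros [_ H] Hi. specialize (H i Hi). fold L in H. split.
  apply Hlo; lra. apply Hhi; lra. Qed.

Lemma cen_valid y : length y = d -> valid_center (cen y).
Proof. intros Hl. split. unfold cen; rewrite length_map; auto.
  intros i Hi. unfold cen. rewrite coord_map by lia. fold L.
  pose proof (clamp_range (coord y i)). split. apply Hlo; lia. apply Hhi; lia. Qed.

Lemma inB_iff y : inB d N gam chi y <-> (In y (grid d N) /\ Bsum y <= r ^ 2).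
Proof. split.
  - intros [Hy [x [Hl [Hx Hb]]]]. split; auto. unfold in_ball in Hb. fold r in Hb.
    apply euclid_le_iff in Hb; [|lra]. eapply Rle_trans; [|apply Hb].
    apply Rsum_le_in. intros i Hi. apply in_seq in Hi. apply clamp_best.
    apply valid_center_coord; [split; auto| lia].
  - intros [Hy Hs]. split; auto. pose proof Hy as Hy'. apply grid_spec in Hy'.
    destruct Hy' as [Hl _]. destruct (cen_valid y Hl) as [Hl' Hc].
    exists (cen y). split; auto. split; auto. unfold in_ball. fold r.
    apply euclid_le_iff; [lra|]. eapply Rle_trans; [|apply Hs]. right.
    apply Rsum_ext_in. intros i Hi. apply in_seq in Hi. unfold cen. rewrite coord_map by lia.
    unfold fR. rewrite <- Z_R_minus, <- Z_R_minus. ring. Qed.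

Lemma inB_center y : inB d N gam chi y -> exists x, valid_center x /\ sqd d x y <= r ^ 2.
Proof. intros [Hy [x [Hl [Hx Hb]]]]. exists x. split. split; auto.
  unfold in_ball in Hb. fold r in Hb. apply euclid_le_iff in Hb; auto. lra. Qed.

Lemma center_inB x y : valid_center x -> In y (grid d N) -> sqd d x y <= r ^ 2 ->
  inB d N gam chi y.
Proof. intros [Hl Hx] Hy Hs. split; auto. exists x. split; auto. split; auto.
  unfold in_ball. fold r. apply euclid_le_iff; auto. lra. Qed.

Lemma inB_grid y : inB d N gam chi y -> In y (grid d N).
Proof. intros [H _]; auto. Qed.

Lemma inB_coord y j : inB d N gam chi y -> (j < d)%nat ->
  2 * p <= IZR (coord y j) <= INR N - 2 * p.
Proof. intros HB Hj. destruct (inB_center y HB) as [x [Hx Hs]].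
  pose proof (sqd_coord d x y j Hj). destruct Hx as [_ Hx]. specialize (Hx j Hj).
  fold L in Hx. rewrite <- Z_R_minus in H.
  assert (Habs := sq_le_bounds (IZR (coord x j) - IZR (coord y j)) r ltac:(lra) ltac:(lra)).
  lra. Qed.

Lemma inB_notDelta y : inB d N gam chi y -> ~ inDelta d N gam chi y.
Proof. intros HB [_ HD]. apply HD. exists y. split; auto. unfold in_ball.
  rewrite euclid_sqd, sqd_self, sqrt_0. fold p. lra. Qed.

Lemma notDelta_near y : In y (grid d N) -> ~ inDelta d N gam chi y ->
  exists w, inB d N gam chi w /\ sqd d w y <= p ^ 2.
Proof. intros Hy HD. apply NNPP. intros Hn. apply HD. split; auto.
  intros [w [Hw Hb]]. apply Hn. exists w. split; auto. unfold in_ball in Hb. fold p in Hb.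
  apply euclid_le_iff in Hb; auto. lra. Qed.

Lemma notDelta_interior y : In y (grid d N) -> ~ inDelta d N gam chi y -> interior d N y.
Proof. intros Hy HD j Hj. destruct (notDelta_near y Hy HD) as [w [Hw Hs]].
  pose proof (inB_coord w j Hw Hj). pose proof (sqd_coord d w y j Hj).
  rewrite <- Z_R_minus in H0.
  assert (Habs := sq_le_bounds (IZR (coord w j) - IZR (coord y j)) p ltac:(lra) ltac:(lra)).
  split.
  - apply le_IZR. lra.
  - apply Z.lt_succ_r. apply lt_IZR. rewrite succ_IZR, minus_IZR, <- INR_IZR_INZ. lra. Qed.

Lemma inB_interior y : inB d N gam chi y -> interior d N y.
Proof. intros H. apply notDelta_interior. apply inB_grid; auto. apply inB_notDelta; auto. Qed.


Lemma sqZ_le (a b : Z) : (Z.abs a <= Z.abs b)%Z -> (IZR a) ^ 2 <= (IZR b) ^ 2.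
Proof. intros H. simpl. rewrite !Rmult_1_r, <- !mult_IZR. apply IZR_le. nia. Qed.

Lemma fR_dec t t' : (t <= t' <= hi)%Z -> fR t' <= fR t.
Proof. intros H. unfold fR. apply sqZ_le. unfold clamp. lia. Qed.
Lemma fR_inc t t' : (lo <= t <= t')%Z -> fR t <= fR t'.
Proof. intros H. unfold fR. apply sqZ_le. unfold clamp. lia. Qed.
Lemma fR_nonneg t : 0 <= fR t.
Proof. apply pow2_ge_0. Qed.

Lemma fR_unique (s t t' : Z) (R' : R) : (s = 1 \/ s = -1)%Z ->
  fR t <= R' -> R' < fR (t + s) -> fR t' <= R' -> R' < fR (t' + s) -> t = t'.
Proof. intros Hs H1 H2 H3 H4.
  assert (Hgen : forall u u', (u < u')%Z -> fR u <= R' -> R' < fR (u + s) -> fR u' <= R' ->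
            R' < fR (u' + s) -> False).
  { intros u u' Hu G1 G2 G3 G4. destruct Hs as [-> | ->].
    - destruct (Z.le_gt_cases (u + 1) hi).
      + assert (fR (u + 1) <= fR u) by (apply fR_dec; lia). lra.
      + assert (fR (u + 1) <= fR u') by (apply fR_inc; lia). lra.
    - destruct (Z.le_gt_cases u' hi).
      + assert (fR (u' + -1) <= fR u) by (apply fR_dec; lia). lra.
      + assert (fR (u' + -1) <= fR u') by (apply fR_inc; lia). lra. }
  destruct (Z.lt_trichotomy t t') as [Hl|[He|Hl]]; auto; exfalso; eauto. Qed.

Definition Qexit (i : nat) (s : Z) (x : list Z) :=
  inB d N gam chi x /\ ~ inB d N gam chi (replace_nth i (coord x i + s)%Z x).

Lemma Bsum_replace x i v : (i < d)%nat -> length x = d ->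
  Bsum (replace_nth i v x) = Bsum x + (fR v - fR (coord x i)).
Proof. intros Hi Hl. unfold Bsum.
  rewrite (Rsum_update (fun j => fR (coord x j)) (fun j => fR (coord (replace_nth i v x) j))
    (seq 0 d) i). rewrite coord_replace_same by lia. auto.
  apply seq_NoDup. apply in_seq; lia. intros j Hj. rewrite coord_replace_other; auto. Qed.

Lemma grid_replace x i v : In x (grid d N) -> (i < d)%nat -> (0 <= v < Z.of_nat N)%Z ->
  In (replace_nth i v x) (grid d N).
Proof. intros Hx Hi Hv. apply grid_spec in Hx as [Hl Hc]. apply grid_spec. split.
  rewrite length_replace; auto. intros j Hj. destruct (Nat.eq_dec j i) as [->|Hne].
  rewrite coord_replace_same by lia; auto. rewrite coord_replace_other; auto. Qed.

Lemma grid_length x : In x (grid d N) -> length x = d.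
Proof. intros H; apply grid_spec in H; tauto. Qed.

Lemma notB_Bsum y : In y (grid d N) -> ~ inB d N gam chi y -> r ^ 2 < Bsum y.
Proof. intros Hy Hn. destruct (Rlt_le_dec (r ^ 2) (Bsum y)); auto. exfalso. apply Hn.
  apply inB_iff. auto. Qed.

Lemma Qexit_unique i s : (i < d)%nat -> (s = 1 \/ s = -1)%Z ->
  forall x x', In x (grid d N) -> In x' (grid d N) -> Qexit i s x -> Qexit i s x' ->
  (forall j, j <> i -> coord x j = coord x' j) -> x = x'.
Proof. intros Hi Hs x x' Hx Hx' [HB Hn] [HB' Hn'] Hc.
  pose proof (grid_length x Hx) as Hl. pose proof (grid_length x' Hx') as Hl'.
  assert (Ex' : x' = replace_nth i (coord x' i) x).
  { apply list_coord_ext. rewrite length_replace; lia. intros j.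
    destruct (Nat.eq_dec j i) as [->|Hne]. rewrite coord_replace_same by lia; auto.
    rewrite coord_replace_other; auto. symmetry; auto. }
  pose proof (inB_interior x HB i Hi) as Ii. pose proof (inB_interior x' HB' i Hi) as Ii'.
  apply notB_Bsum in Hn; [|apply grid_replace; auto; destruct Hs; subst; lia].
  apply notB_Bsum in Hn'; [|apply grid_replace; auto; destruct Hs; subst; lia].
  apply inB_iff in HB as [_ HB]. apply inB_iff in HB' as [_ HB'].
  rewrite Bsum_replace in Hn, Hn' by auto.
  assert (Hb' : Bsum x' = Bsum x + (fR (coord x' i) - fR (coord x i))).
  { rewrite Ex' at 1. rewrite Bsum_replace; auto. }
  assert (coord x i = coord x' i).
  { apply (fR_unique s (coord x i) (coord x' i) (r ^ 2 - Bsum x + fR (coord x i))); auto; lra. }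
  apply list_coord_ext; [lia|]. intros j. destruct (Nat.eq_dec j i) as [->|Hne]; auto. Qed.

Lemma bd_sub x : inBdB d N gam chi x ->
  exists is, In is (list_prod (seq 0 d) [1%Z; (-1)%Z]) /\ Qexit (fst is) (snd is) x.
Proof. intros [HB [y [Hy Hn]]]. apply in_torus_nbrs in Hy as [i [s [Hi [Hs ->]]]].
  exists (i, s). split. apply in_prod. apply in_seq; lia. destruct Hs as [-> | ->]; simpl; auto.
  split; auto. simpl. pose proof (inB_interior x HB i Hi).
  rewrite Z.mod_small in Hn; auto. destruct Hs; subst; lia. Qed.

Lemma count_bd_upper :
  Rsum_list (fun x => ind (inBdB d N gam chi x)) (grid d N) <= 2 * INR d * INR N ^ (d - 1).
Proof. eapply Rle_trans.
  { apply Rsum_le_in. intros x _. apply (ind_le_sum _ (fun is => Qexit (fst is) (snd is) x)).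
    apply bd_sub. }
  rewrite Rsum_swap. replace (2 * INR d * INR N ^ (d - 1)) with
    (Rsum_list (fun _ => INR N ^ (d - 1)) (list_prod (seq 0 d) [1%Z; (-1)%Z])).
  apply Rsum_le_in. intros [i s] His. apply in_prod_iff in His as [Hi Hs]. apply in_seq in Hi.
  apply (count_unique d N i). lia. intros x x' Hx Hx' Hq Hq' Hc.
  apply (Qexit_unique i s); auto; try lia. simpl in Hs. destruct Hs as [<-|[<-|[]]]; auto.
  rewrite Rsum_const, length_prod, length_seq. simpl length. rewrite mult_INR. simpl. ring. Qed.

Lemma count_bd_lower k (R0 : Z) : d = S k -> IZR R0 <= r < IZR R0 + 1 ->
  IZR (hi - lo + 1) ^ k <= Rsum_list (fun x => ind (inBdB d N gam chi x)) (grid d N).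
Proof. intros Hdk HR0. assert (Hlo0 : (0 < lo)%Z) by (apply lt_IZR; pose proof (proj2 (Hlo lo) (Z.le_refl _)); lra).
  assert (Hhi0 : IZR hi <= INR N - L) by (apply Hhi; lia).
  assert (HR0pos : (0 <= R0)%Z) by (assert (IZR (-1) < IZR R0) by lra; apply lt_IZR in H; lia).
  set (A := (hi + R0)%Z).
  assert (HA : (A + 1 < Z.of_nat N)%Z).
  { apply lt_IZR. rewrite <- INR_IZR_INZ. unfold A. rewrite plus_IZR, plus_IZR. lra. }
  assert (HhiN : (hi < Z.of_nat N)%Z) by lia.
  rewrite <- (count_box k N lo hi) by lia.
  replace (grid d N) with (grid (S k) N) by (rewrite Hdk; auto). rewrite Rsum_grid_S.
  eapply Rle_trans; [|apply (Rsum_ge_elem _ _ A)].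
  - apply Rsum_le_in. intros t Ht. apply ind_imp. intros Hbox.
    assert (Hg : In (A :: t) (grid d N)).
    { rewrite Hdk. apply grid_spec. apply grid_spec in Ht as [Htl Htc]. split; simpl; auto.
      intros [|j] Hj. rewrite coord_cons0. lia. rewrite coord_consS. apply Htc; lia. }
    assert (Hsum0 : forall v, Bsum (v :: t) = fR v).
    { intros v. unfold Bsum. rewrite Hdk. simpl seq. rewrite Rsum_cons. rewrite coord_cons0.
      rewrite (Rsum_ext_in _ (fun _ => 0)). rewrite Rsum_const. ring.
      intros j Hj. apply in_seq in Hj. destruct j as [|j]; [lia|]. rewrite coord_consS.
      unfold fR. specialize (Hbox j ltac:(lia)). unfold clamp.
      replace (coord t j - Z.max lo (Z.min hi (coord t j)))%Z with 0%Z by lia. simpl; ring. }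
    assert (HfA : fR A = IZR R0 ^ 2).
    { unfold fR, clamp. f_equal. f_equal. unfold A. lia. }
    split.
    + apply inB_iff. split; auto. rewrite Hsum0, HfA. apply pow_incr. split; [apply IZR_le; lia|lra].
    + exists (replace_nth 0 ((coord (A :: t) 0 + 1) mod Z.of_nat N)%Z (A :: t)). split.
      * apply in_torus_nbrs. exists 0%nat, 1%Z. repeat split; auto; lia.
      * rewrite coord_cons0, Z.mod_small by lia. simpl replace_nth. intros HB.
        apply inB_iff in HB as [_ HB]. rewrite Hsum0 in HB. unfold fR, clamp in HB.
        replace (A + 1 - Z.max lo (Z.min hi (A + 1)))%Z with (R0 + 1)%Z in HB by (unfold A; lia).
        rewrite plus_IZR in HB. assert (r < IZR R0 + 1) by lra.
        assert (r ^ 2 < (IZR R0 + 1) ^ 2) by (simpl; nra). lra.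
  - intros a _. apply Rsum_nonneg. intros; apply ind_01.
  - apply in_map_iff. exists (Z.to_nat A). split. lia. apply in_seq. lia.
Qed.

Definition uv (y : list Z) j := IZR (coord y j - coord (cen y) j).
Definition lin (y z : list Z) :=
  Rsum_list (fun j => uv y j * IZR (coord z j - coord (cen y) j)) (seq 0 d).

Lemma lin_replace y z i v : (i < d)%nat -> length z = d ->
  lin y (replace_nth i v z) = lin y z + uv y i * IZR (v - coord z i).
Proof. intros Hi Hl. unfold lin.
  rewrite (Rsum_update (fun j => uv y j * IZR (coord z j - coord (cen y) j))
     (fun j => uv y j * IZR (coord (replace_nth i v z) j - coord (cen y) j)) (seq 0 d) i).
  rewrite coord_replace_same by lia. rewrite !minus_IZR. ring.
  apply seq_NoDup. apply in_seq; lia. intros j Hj. rewrite coord_replace_other; auto. Qed.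

Lemma sqd_cen y : sqd d (cen y) y = Rsum_list (fun j => uv y j ^ 2) (seq 0 d).
Proof. apply Rsum_ext_in. intros. unfold uv. rewrite !minus_IZR. ring. Qed.

Lemma lin_diff y z w : lin y z - lin y w =
  Rsum_list (fun j => uv y j * IZR (coord z j - coord w j)) (seq 0 d).
Proof. unfold lin. rewrite Rsum_minus. apply Rsum_ext_in. intros.
  rewrite !minus_IZR. ring. Qed.

Lemma lin_B y z rho : length y = d -> rho ^ 2 = sqd d (cen y) y -> 0 < rho ->
  inB d N gam chi z -> lin y z <= rho * r.
Proof. intros Hl Hrho Hpos HB. destruct (inB_center z HB) as [c [Hc Hs]].
  assert (E : lin y z = lin y c + (lin y z - lin y c)) by ring. rewrite E, lin_diff.
  assert (lin y c <= 0).
  { unfold lin. rewrite <- (Rmult_0_r (INR (length (seq 0 d)))), <- Rsum_const.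
    apply Rsum_le_in. intros j Hj. apply in_seq in Hj. unfold uv, cen.
    rewrite coord_map by lia. rewrite <- mult_IZR. apply IZR_le.
    pose proof (clamp_proj (coord y j) (coord c j) (valid_center_coord c j Hc ltac:(lia))). lia. }
  assert (Rsum_list (fun j => uv y j * IZR (coord z j - coord c j)) (seq 0 d) <= rho * r).
  { apply CS_sum; auto. rewrite <- sqd_cen, Hrho. lra.
    rewrite sqd_sym in Hs. eapply Rle_trans; [|apply Hs]. right. reflexivity. }
  lra. Qed.

Lemma lin_near y z w rho : rho ^ 2 = sqd d (cen y) y -> 0 < rho ->
  sqd d z w <= p ^ 2 -> lin y z <= lin y w + rho * p.
Proof. intros Hrho Hpos Hs. assert (lin y z - lin y w <= rho * p); [|lra].
  rewrite lin_diff. apply CS_sum; auto. lra. rewrite <- sqd_cen, Hrho. lra. Qed.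

Lemma uv_le y j rho : (j < d)%nat -> rho ^ 2 = sqd d (cen y) y -> 0 < rho ->
  - rho <= uv y j <= rho.
Proof. intros Hj Hrho Hpos. apply sq_le_bounds. lra. rewrite Hrho, sqd_cen.
  apply (Rsum_ge_elem (fun j => uv y j ^ 2)). intros; apply pow2_ge_0. apply in_seq; lia. Qed.

Lemma uv_big y rho : rho ^ 2 = sqd d (cen y) y -> 0 < rho ->
  exists j, (j < d)%nat /\ rho / INR d <= Rabs (uv y j).
Proof. intros Hrho Hpos. apply NNPP. intros Hn.
  assert (Hd1 : 1 <= INR d) by (apply (le_INR 1); lia).
  assert (Hall : forall j, In j (seq 0 d) -> uv y j ^ 2 < rho * (rho / INR d)).
  { intros j Hj. apply in_seq in Hj. assert (H1 : Rabs (uv y j) < rho / INR d).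
    { destruct (Rlt_le_dec (Rabs (uv y j)) (rho / INR d)); auto. exfalso; apply Hn.
      exists j; split; auto; lia. }
    pose proof (uv_le y j rho ltac:(lia) Hrho Hpos).
    assert (uv y j ^ 2 = Rabs (uv y j) * Rabs (uv y j)) by (rewrite <- Rabs_mult; simpl;
      rewrite Rmult_1_r; rewrite Rabs_right; auto; apply Rle_ge; apply Rle_0_sqr).
    rewrite H0. pose proof (Rabs_pos (uv y j)).
    assert (Rabs (uv y j) <= rho) by (apply Rabs_le; lra). nra. }
  assert (rho ^ 2 < rho ^ 2).
  { rewrite Hrho at 1. rewrite sqd_cen.
    apply Rlt_le_trans with (Rsum_list (fun _ => rho * (rho / INR d)) (seq 0 d) ).
    2: { rewrite Rsum_const, length_seq. right. field. lra. }
    apply Rsum_lt_in; auto. intros E. apply (f_equal (@length nat)) in E.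
    rewrite length_seq in E. simpl in E. lia. }
  lra. Qed.

Variable h : list Z -> R.
Hypothesis Hh : forall x, In x (grid d N) -> Un_cv (fun n => esc_approx d N gam chi n x) (h x).

Lemma notB_sqd y : In y (grid d N) -> ~ inB d N gam chi y -> r ^ 2 < sqd d (cen y) y.
Proof. intros Hy Hn. destruct (Rlt_le_dec (r ^ 2) (sqd d (cen y) y)); auto. exfalso; apply Hn.
  apply (center_inB (cen y)); auto. apply cen_valid. apply grid_length; auto. Qed.

Lemma nbr_form z w : interior d N z -> In w (torus_nbrs d N z) ->
  exists i s, (i < d)%nat /\ (s = 1 \/ s = -1)%Z /\ w = replace_nth i (coord z i + s)%Z z.
Proof. intros Iz Hw. apply in_torus_nbrs in Hw as [i [s [Hi [Hs ->]]]]. exists i, s.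
  repeat split; auto. rewrite Z.mod_small; auto. specialize (Iz i Hi). destruct Hs; subst; lia. Qed.

Lemma h_harm_ge x w : In x (grid d N) -> ~ inDelta d N gam chi x -> In w (torus_nbrs d N x) ->
  / (2 * INR d) * ((1 - ind (inB d N gam chi w)) * h w) <= h x.
Proof. intros Hx HD Hw. rewrite (h_harm d N gam chi h HN Hh x Hx HD).
  assert (0 < INR d) by (apply lt_0_INR; lia).
  apply Rmult_le_compat_l. left; apply Rinv_0_lt_compat; lra.
  apply (Rsum_ge_elem (fun z => (1 - ind (inB d N gam chi z)) * h z)); auto.
  intros a Ha. apply Rmult_le_pos. pose proof (ind_01 (inB d N gam chi a)); lra.
  apply (h_bounds d N gam chi h Hd Hh). eapply nbr_in_grid; eauto. Qed.

Lemma minprinc y rho : In y (grid d N) -> rho ^ 2 = sqd d (cen y) y -> r < rho ->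
  forall z, In z (grid d N) -> ~ inB d N gam chi z -> ~ inDelta d N gam chi z ->
  (lin y z / rho - r) / (p + 1) <= h z.
Proof. intros Hy Hrho Hrr.
  assert (Hrho0 : 0 < rho) by lra.
  assert (Hd0 : 0 < INR d) by (apply lt_0_INR; lia).
  set (ell := fun z => lin y z / rho - r). set (M := p + 1).
  set (F := fun z => (1 - ind (inB d N gam chi z)) * (h z - ell z / M)).
  assert (HellB : forall z, inB d N gam chi z -> ell z <= 0).
  { intros z HB. pose proof (lin_B y z rho (grid_length y Hy) Hrho Hrho0 HB). unfold ell.
    apply (Rmult_le_reg_l rho); auto. unfold Rdiv.
    replace (rho * (lin y z * / rho - r)) with (lin y z - rho * r) by (field; lra). lra. }
  assert (HellS : forall z, In z (grid d N) -> ~ inDelta d N gam chi z -> ell z <= p).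
  { intros z Hz HD. destruct (notDelta_near z Hz HD) as [w [Hw Hs]].
    pose proof (lin_B y w rho (grid_length y Hy) Hrho Hrho0 Hw).
    rewrite sqd_sym in Hs. pose proof (lin_near y z w rho Hrho Hrho0 Hs).
    unfold ell. apply (Rmult_le_reg_l rho); auto. unfold Rdiv.
    replace (rho * (lin y z * / rho - r)) with (lin y z - rho * r) by (field; lra). lra. }
  assert (Hell_rep : forall z i s, length z = d -> (i < d)%nat ->
            ell (replace_nth i (coord z i + s)%Z z) = ell z + IZR s * (uv y i / rho)).
  { intros z i s Hl Hi. unfold ell. rewrite lin_replace by auto.
    replace (coord z i + s - coord z i)%Z with s by lia. field. lra. }
  assert (Hnbr : forall z w, In z (grid d N) -> interior d N z -> In w (torus_nbrs d N z) ->
            ell w <= ell z + 1).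
  { intros z w Hz Iz Hw. destruct (nbr_form z w Iz Hw) as [i [s [Hi [Hs ->]]]].
    rewrite Hell_rep by (auto; apply grid_length; auto).
    pose proof (uv_le y i rho Hi Hrho Hrho0).
    assert (-1 <= uv y i / rho <= 1).
    { split; apply (Rmult_le_reg_l rho); auto; unfold Rdiv;
      replace (rho * (uv y i * / rho)) with (uv y i) by (field; lra); lra. }
    destruct Hs as [-> | ->]; simpl; lra. }
  assert (Hharm : forall z, In z (grid d N) -> interior d N z ->
            Rsum_list ell (torus_nbrs d N z) = 2 * INR d * ell z).
  { intros z Hz Iz. rewrite Rsum_nbrs_interior by auto.
    rewrite (Rsum_ext_in _ (fun _ => 2 * ell z)).
    rewrite Rsum_const, length_seq. ring.
    intros i Hi. apply in_seq in Hi.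
    replace (coord z i - 1)%Z with (coord z i + -1)%Z by lia.
    rewrite !Hell_rep by (auto; try lia; apply grid_length; auto). simpl. lra. }
  intros z Hz HnB HnD. destruct (Rle_dec ((lin y z / rho - r) / (p + 1)) (h z)) as [|Hlt]; auto.
  exfalso.
  assert (HFz : F z < 0).
  { unfold F. rewrite ind_false by auto. fold (ell z) in Hlt. fold M in Hlt. unfold Rdiv in *. lra. }
  destruct (finite_min (grid d N) (fun z => ~ inB d N gam chi z /\ ~ inDelta d N gam chi z) F z Hz
     (conj HnB HnD)) as [zm [Hzm [[HzmB HzmD] Hmin]]].
  set (m := F zm).
  assert (Hm : m < 0) by (specialize (Hmin z Hz (conj HnB HnD)); unfold m; lra).
  assert (Hclaim : forall k, exists w, In w (grid d N) /\ ~ inB d N gam chi w /\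
            ~ inDelta d N gam chi w /\ F w = m /\ (Z.of_nat k <= coord w 0)%Z).
  { induction k.
    - exists zm. repeat split; auto. apply grid_spec in Hzm as [_ Hc]. specialize (Hc 0%nat Hd). lia.
    - destruct IHk as [w [Hw [HwB [HwD [HFw Hk]]]]].
      pose proof (notDelta_interior w Hw HwD) as Iw.
      assert (Hlw : length w = d) by (apply grid_length; auto).
      assert (HFnb : forall v, In v (torus_nbrs d N w) -> m <= F v).
      { intros v Hv. assert (Hvg : In v (grid d N)) by (eapply nbr_in_grid; eauto).
        destruct (classic (inB d N gam chi v)) as [HvB|HvB].
        - unfold F. rewrite ind_true by auto. lra.
        - destruct (classic (inDelta d N gam chi v)) as [HvD|HvD].
          + unfold F. rewrite ind_false by auto. rewrite (h_Delta d N gam chi h Hh v Hvg HvD).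
            pose proof (Hnbr w v Hw Iw Hv). pose proof (HellS w Hw HwD).
            assert (ell v / M <= 1). { unfold M. apply (Rmult_le_reg_l (p + 1)). lra.
              unfold Rdiv. replace ((p + 1) * (ell v * / (p + 1))) with (ell v) by (field; lra). lra. }
            lra.
        + apply Hmin; auto. }
      assert (HFsum : / (2 * INR d) * Rsum_list F (torus_nbrs d N w) <= F w).
      { unfold F at 2. rewrite ind_false by auto.
        rewrite (h_harm d N gam chi h HN Hh w Hw HwD).
        assert (Hel : ell w = / (2 * INR d) * Rsum_list ell (torus_nbrs d N w)).
        { rewrite Hharm by auto. field. lra. }
        rewrite Hel.
        replace ((1 - 0) * (/ (2 * INR d) *
           Rsum_list (fun z0 => (1 - ind (inB d N gam chi z0)) * h z0) (torus_nbrs d N w) -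
           / (2 * INR d) * Rsum_list ell (torus_nbrs d N w) / M))
          with (/ (2 * INR d) * Rsum_list (fun a => (1 - ind (inB d N gam chi a)) * h a - / M * ell a)
                  (torus_nbrs d N w)).
        2: { rewrite <- Rsum_minus, Rsum_scal. field. unfold M; lra. }
        apply Rmult_le_compat_l. left; apply Rinv_0_lt_compat; lra.
        apply Rsum_le_in. intros v Hv. unfold F.
        destruct (classic (inB d N gam chi v)) as [HvB|HvB].
        - rewrite ind_true by auto. pose proof (HellB v HvB).
          assert (0 < / M) by (apply Rinv_0_lt_compat; unfold M; lra).
          assert (/ M * ell v <= 0) by nra. lra.
        - rewrite ind_false by auto. lra. }
      set (ws := replace_nth 0 (coord w 0 + 1)%Z w).
      assert (Hws : In ws (torus_nbrs d N w)).
      { apply in_torus_nbrs. exists 0%nat, 1%Z. repeat split; auto.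
        rewrite Z.mod_small; auto. specialize (Iw 0%nat Hd). lia. }
      pose proof (Rsum_one_big F (torus_nbrs d N w) ws m Hws HFnb) as Hbig.
      rewrite length_torus_nbrs, mult_INR in Hbig. simpl INR in Hbig.
      assert (HFws : F ws <= m).
      { assert (/ (2 * INR d) * (F ws - m + 2 * INR d * m) <= F w).
        { eapply Rle_trans; [|apply HFsum]. apply Rmult_le_compat_l; [|lra].
          left; apply Rinv_0_lt_compat; lra. }
        rewrite Rmult_plus_distr_l, <- Rmult_assoc, Rinv_l in H by lra.
        assert (0 < / (2 * INR d)) by (apply Rinv_0_lt_compat; lra). nra. }
      assert (HFws' : F ws = m) by (pose proof (HFnb ws Hws); lra).
      assert (Hwsg : In ws (grid d N)) by (eapply nbr_in_grid; eauto).
      assert (HwsB : ~ inB d N gam chi ws).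
      { intros HB. unfold F in HFws'. rewrite ind_true in HFws' by auto. lra. }
      assert (HwsD : ~ inDelta d N gam chi ws).
      { intros HD. unfold F in HFws'. rewrite ind_false in HFws' by auto.
        rewrite (h_Delta d N gam chi h Hh ws Hwsg HD) in HFws'.
        pose proof (Hnbr w ws Hw Iw Hws). pose proof (HellS w Hw HwD).
        assert (ell ws / M <= 1). { unfold M. apply (Rmult_le_reg_l (p + 1)). lra.
          unfold Rdiv. replace ((p + 1) * (ell ws * / (p + 1))) with (ell ws) by (field; lra). lra. }
        lra. }
      exists ws. repeat split; auto. unfold ws. rewrite coord_replace_same by lia. lia. }
  destruct (Hclaim N) as [w [Hw [_ [_ [_ Hk]]]]]. apply grid_spec in Hw as [_ Hc].
  specialize (Hc 0%nat Hd). lia.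
Qed.

Lemma lin_self y : lin y y = sqd d (cen y) y.
Proof. rewrite sqd_cen. apply Rsum_ext_in. intros. unfold uv. simpl. ring. Qed.

Lemma h_lower x : In x (grid d N) -> inBdB d N gam chi x ->
  / (4 * INR d ^ 3 * (p + 1)) <= h x.
Proof. intros Hx [HxB [y [Hy HyB]]].
  assert (Hd1 : 1 <= INR d) by (apply (le_INR 1); lia).
  assert (HxD := inB_notDelta x HxB).
  assert (Hyg : In y (grid d N)) by (eapply nbr_in_grid; eauto).
  pose proof (h_harm_ge x y Hx HxD Hy) as Hhx. rewrite ind_false in Hhx by auto.
  rewrite Rminus_0_r, Rmult_1_l in Hhx.
  assert (Hpos : 0 < 4 * INR d ^ 3 * (p + 1)).
  { apply Rmult_lt_0_compat; [|lra]. apply Rmult_lt_0_compat; [lra|]. apply pow_lt; lra. }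
  assert (Hhy : / (2 * INR d * INR d * (p + 1)) <= h y).
  { destruct (classic (inDelta d N gam chi y)) as [HyD|HyD].
    - rewrite (h_Delta d N gam chi h Hh y Hyg HyD). rewrite <- Rinv_1 at 2.
      apply Rinv_le_contravar. lra. nra.
    - set (rho := sqrt (sqd d (cen y) y)).
      assert (Hrho : rho ^ 2 = sqd d (cen y) y) by (unfold rho; rewrite pow2_sqrt; auto; apply sqd_nonneg).
      pose proof (notB_sqd y Hyg HyB) as Hs.
      assert (Hrr : r < rho).
      { unfold rho. rewrite <- (sqrt_pow2 r) by lra. apply sqrt_lt_1_alt. split; auto.
        apply pow2_ge_0. }
      destruct (uv_big y rho Hrho ltac:(lra)) as [j [Hj Hbig]].
      pose proof (notDelta_interior y Hyg HyD) as Iy.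
      assert (Hly : length y = d) by (apply grid_length; auto).
      set (sg := if Rle_dec 0 (uv y j) then 1%Z else (-1)%Z).
      assert (Hsg : (sg = 1 \/ sg = -1)%Z) by (unfold sg; destruct (Rle_dec 0 (uv y j)); auto).
      assert (Hsgv : uv y j * IZR sg = Rabs (uv y j)).
      { unfold sg; destruct (Rle_dec 0 (uv y j)). rewrite Rabs_right by lra. ring.
        rewrite Rabs_left by lra. ring. }
      set (y' := replace_nth j (coord y j + sg)%Z y).
      assert (Hy' : In y' (torus_nbrs d N y)).
      { apply in_torus_nbrs. exists j, sg. repeat split; auto. rewrite Z.mod_small; auto.
        specialize (Iy j Hj). destruct Hsg; subst; lia. }
      assert (Hy'g : In y' (grid d N)) by (eapply nbr_in_grid; eauto).
      assert (Hlin : lin y y' = rho ^ 2 + Rabs (uv y j)).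
      { unfold y'. rewrite lin_replace by auto. rewrite lin_self, Hrho.
        replace (coord y j + sg - coord y j)%Z with sg by lia. rewrite Hsgv. auto. }
      assert (Hell : / INR d <= lin y y' / rho - r).
      { rewrite Hlin. unfold Rdiv. replace ((rho ^ 2 + Rabs (uv y j)) * / rho - r)
          with ((rho - r) + Rabs (uv y j) / rho) by (field; lra).
        assert (/ INR d <= Rabs (uv y j) / rho).
        { apply (Rmult_le_reg_l rho). lra. replace (rho * (Rabs (uv y j) / rho)) with (Rabs (uv y j))
            by (field; lra). auto. }
        lra. }
      assert (Hy'B : ~ inB d N gam chi y').
      { intros HB. pose proof (lin_B y y' rho Hly Hrho ltac:(lra) HB).
        assert (lin y y' / rho - r <= 0).
        { apply (Rmult_le_reg_l rho). lra. unfold Rdiv.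
          replace (rho * (lin y y' * / rho - r)) with (lin y y' - rho * r) by (field; lra). lra. }
        assert (0 < / INR d) by (apply Rinv_0_lt_compat; lra). lra. }
      pose proof (h_harm_ge y y' Hyg HyD Hy') as Hhy. rewrite ind_false in Hhy by auto.
      rewrite Rminus_0_r, Rmult_1_l in Hhy.
      assert (Hhy' : / (INR d * (p + 1)) <= h y').
      { destruct (classic (inDelta d N gam chi y')) as [Hy'D|Hy'D].
        - rewrite (h_Delta d N gam chi h Hh y' Hy'g Hy'D). rewrite <- Rinv_1 at 2.
          apply Rinv_le_contravar. lra. nra.
        - pose proof (minprinc y rho Hyg Hrho Hrr y' Hy'g Hy'B Hy'D).
          eapply Rle_trans; [|apply H]. rewrite Rinv_mult. unfold Rdiv.
          apply Rmult_le_compat_r. left; apply Rinv_0_lt_compat; lra. auto. }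
      eapply Rle_trans; [|apply Hhy].
      replace (/ (2 * INR d * INR d * (p + 1))) with (/ (2 * INR d) * / (INR d * (p + 1)))
        by (field; split; lra).
      apply Rmult_le_compat_l; auto. left; apply Rinv_0_lt_compat; lra. }
  eapply Rle_trans; [|apply Hhx].
  replace (/ (4 * INR d ^ 3 * (p + 1))) with (/ (2 * INR d) * / (2 * INR d * INR d * (p + 1)))
    by (field; split; lra).
  apply Rmult_le_compat_l; auto. left; apply Rinv_0_lt_compat; lra. Qed.

Definition flz (t : R) : Z := (up t - 1)%Z.
Definition trz (t : R) : Z := if Rle_dec 0 t then flz t else (- flz (- t))%Z.

Lemma flz_prop t : IZR (flz t) <= t < IZR (flz t) + 1.
Proof. unfold flz. destruct (archimed t). rewrite minus_IZR. lra. Qed.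

Lemma trz_prop t : (0 <= t -> 0 <= IZR (trz t) <= t /\ t < IZR (trz t) + 1) /\
                   (t < 0 -> t <= IZR (trz t) <= 0 /\ IZR (trz t) < t + 1).
Proof. unfold trz. split; intros Ht; destruct (Rle_dec 0 t); try lra.
  - pose proof (flz_prop t). assert (IZR (-1) < IZR (flz t)) by lra. apply lt_IZR in H0.
    assert (0 <= flz t)%Z by lia. apply IZR_le in H1. lra.
  - pose proof (flz_prop (- t)). rewrite opp_IZR.
    assert (IZR (-1) < IZR (flz (- t))) by lra. apply lt_IZR in H0.
    assert (0 <= flz (- t))%Z by lia. apply IZR_le in H1. lra. Qed.

Lemma trz_bounds lam v : 0 < lam < 1 ->
  (IZR (trz (lam * v))) ^ 2 <= lam ^ 2 * v ^ 2 /\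
  (v - IZR (trz (lam * v))) ^ 2 <= (1 - lam) ^ 2 * v ^ 2 + 2 * (1 - lam) * Rabs v + 1 /\
  (0 <= v -> 0 <= IZR (trz (lam * v)) <= v) /\ (v < 0 -> v <= IZR (trz (lam * v)) <= 0).
Proof. intros Hl. destruct (trz_prop (lam * v)) as [P1 P2].
  set (tr := IZR (trz (lam * v))) in *.
  destruct (Rle_dec 0 v) as [Hv|Hv].
  - assert (0 <= lam * v) by nra. destruct (P1 H) as [A1 A2]. rewrite Rabs_right by lra.
    set (e := lam * v - tr). set (a := (1 - lam) * v).
    assert (0 <= e < 1) by (unfold e; lra). assert (0 <= a) by (unfold a; nra).
    assert (v - tr = a + e) by (unfold a, e; ring).
    split; [|split; [|split; intros; [nra|lra]]].
    + simpl. assert (tr * tr <= (lam * v) * (lam * v)) by nra. nra.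
    + rewrite H2. replace ((1 - lam) ^ 2 * v ^ 2 + 2 * (1 - lam) * v + 1) with (a ^ 2 + 2 * a + 1)
        by (unfold a; ring). simpl. nra.
  - assert (lam * v < 0) by nra. destruct (P2 H) as [A1 A2]. rewrite Rabs_left by lra.
    set (e := tr - lam * v). set (a := (1 - lam) * (- v)).
    assert (0 <= e < 1) by (unfold e; lra). assert (0 <= a) by (unfold a; nra).
    assert (v - tr = - (a + e)) by (unfold a, e; ring).
    split; [|split; [|split; intros; [lra|nra]]].
    + simpl. assert (tr * tr <= (lam * v) * (lam * v)) by nra. nra.
    + rewrite H2. replace ((1 - lam) ^ 2 * v ^ 2 + 2 * (1 - lam) * - v + 1) with (a ^ 2 + 2 * a + 1)
        by (unfold a; ring). simpl. nra. Qed.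

Definition cmap (c z : list Z) (lam : R) : list Z :=
  map (fun j => (coord c j + trz (lam * IZR (coord z j - coord c j)))%Z) (seq 0 d).

Lemma coord_map_seq (f : nat -> Z) k j : (j < k)%nat -> coord (map f (seq 0 k)) j = f j.
Proof. intros H. unfold coord. rewrite (nth_indep _ _ (f 0%nat)) by (rewrite length_map, length_seq; auto).
  rewrite map_nth, seq_nth by auto. reflexivity. Qed.

Lemma coord_cmap c z lam j : (j < d)%nat ->
  coord (cmap c z lam) j = (coord c j + trz (lam * IZR (coord z j - coord c j)))%Z.
Proof. intros Hj. unfold cmap. rewrite coord_map_seq by auto. reflexivity. Qed.

Lemma far_Delta c z : valid_center c -> In z (grid d N) -> r ^ 2 < sqd d c z ->
  inDelta d N gam chi z -> p - INR d < sqrt (sqd d c z) - r.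
Proof. intros Hc Hz Hs HD. destruct (Rlt_le_dec (p - INR d) (sqrt (sqd d c z) - r)) as [|Hle]; auto.
  exfalso. destruct HD as [_ HD]. apply HD.
  set (rho := sqrt (sqd d c z)).
  assert (Hrho : rho ^ 2 = sqd d c z) by (unfold rho; rewrite pow2_sqrt; auto; apply sqd_nonneg).
  assert (Hrr : r < rho).
  { unfold rho. rewrite <- (sqrt_pow2 r) by lra. apply sqrt_lt_1_alt. split; auto. apply pow2_ge_0. }
  set (lam := r / rho).
  assert (Hlam : 0 < lam < 1).
  { unfold lam. split. apply Rdiv_lt_0_compat; lra. apply (Rmult_lt_reg_l rho). lra.
    replace (rho * (r / rho)) with r by (field; lra). lra. }
  set (w := cmap c z lam).
  assert (Hlc : length c = d) by (destruct Hc; auto).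
  assert (Hw : forall j, (j < d)%nat -> let v := IZR (coord z j - coord c j) in
     IZR (coord w j - coord c j) = IZR (trz (lam * v))).
  { intros j Hj v. unfold w. rewrite coord_cmap by auto. f_equal. unfold v. ring. }
  exists w. split.
  - apply (center_inB c); auto.
    + apply grid_spec. split. unfold w, cmap. rewrite length_map, length_seq; auto.
      intros j Hj. apply grid_spec in Hz as [_ Hzc]. specialize (Hzc j Hj).
      pose proof (valid_center_coord c j Hc Hj) as Hcj.
      assert (Hlo0 : (0 < lo)%Z) by (apply lt_IZR; pose proof (proj2 (Hlo lo) (Z.le_refl _)); lra).
      assert (HhiN : (hi < Z.of_nat N)%Z).
      { assert (IZR hi <= INR N - L) by (apply Hhi; lia). apply lt_IZR. rewrite <- INR_IZR_INZ. lra. }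
      specialize (Hw j Hj). simpl in Hw.
      destruct (trz_bounds lam (IZR (coord z j - coord c j)) Hlam) as [_ [_ [B1 B2]]].
      rewrite <- Hw in B1, B2.
      destruct (Rle_dec 0 (IZR (coord z j - coord c j))) as [H0|H0].
      * specialize (B1 H0). destruct B1 as [B1 B1']. apply le_IZR in B1. apply le_IZR in B1'.
        apply le_IZR in H0. lia.
      * assert (H0' : IZR (coord z j - coord c j) < 0) by lra. specialize (B2 H0').
        destruct B2 as [B2 B2']. apply le_IZR in B2. apply le_IZR in B2'. apply lt_IZR in H0'. lia.
    + unfold sqd. apply Rle_trans with (Rsum_list (fun j => lam ^ 2 * IZR (coord z j - coord c j) ^ 2) (seq 0 d)).
      * apply Rsum_le_in. intros j Hj. apply in_seq in Hj.
        replace (IZR (coord c j - coord w j)) with (- IZR (coord w j - coord c j))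
          by (rewrite !minus_IZR; ring).
        rewrite Hw by lia. destruct (trz_bounds lam (IZR (coord z j - coord c j)) Hlam) as [B _].
        simpl in *. lra.
      * rewrite Rsum_scal. replace (Rsum_list (fun j => IZR (coord z j - coord c j) ^ 2) (seq 0 d))
          with (sqd d c z). rewrite <- Hrho. unfold lam. right. field. lra.
        apply Rsum_ext_in. intros. rewrite !minus_IZR. ring.
  - unfold in_ball. apply (proj2 (euclid_le_iff d w z p ltac:(lra))).
    apply Rle_trans with (Rsum_list (fun j => (1 - lam) ^ 2 * IZR (coord z j - coord c j) ^ 2
                                   + (2 * (1 - lam) * rho + 1)) (seq 0 d)).
    + apply Rsum_le_in. intros j Hj. apply in_seq in Hj.
      replace (IZR (coord w j - coord z j)) with
        (- (IZR (coord z j - coord c j) - IZR (coord w j - coord c j))) by (rewrite !minus_IZR; ring).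
      rewrite Hw by lia.
      destruct (trz_bounds lam (IZR (coord z j - coord c j)) Hlam) as [_ [B _]].
      assert (Rabs (IZR (coord z j - coord c j)) <= rho).
      { apply Rabs_le. apply sq_le_bounds. lra. rewrite Hrho.
        replace (IZR (coord z j - coord c j) ^ 2) with (IZR (coord c j - coord z j) ^ 2)
          by (rewrite !minus_IZR; ring). apply sqd_coord; lia. }
      assert (2 * (1 - lam) * Rabs (IZR (coord z j - coord c j)) <= 2 * (1 - lam) * rho).
      { apply Rmult_le_compat_l; lra. }
      simpl in *. lra.
    + rewrite Rsum_plus, Rsum_scal, Rsum_const, length_seq.
      replace (Rsum_list (fun j => IZR (coord z j - coord c j) ^ 2) (seq 0 d)) with (rho ^ 2).
      2: { rewrite Hrho. apply Rsum_ext_in. intros. rewrite !minus_IZR. ring. }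
      assert (E : (1 - lam) * rho = rho - r) by (unfold lam; field; lra).
      assert (Hd1 : 1 <= INR d) by (apply (le_INR 1); lia).
      assert (0 <= rho - r) by lra.
      assert (rho - r + INR d <= p) by (unfold rho; lra).
      replace ((1 - lam) ^ 2 * rho ^ 2) with ((rho - r) ^ 2) by (rewrite <- E; ring).
      replace (INR d * (2 * (1 - lam) * rho + 1)) with (INR d * (2 * (rho - r) + 1)) by (rewrite <- E; ring).
      apply Rle_trans with ((rho - r + INR d) ^ 2). simpl. nra.
      apply pow_incr. lra.
Qed.

Definition rz c z := sqrt (sqd d c z).
Lemma rz_sq c z : rz c z ^ 2 = sqd d c z.
Proof. unfold rz. rewrite pow2_sqrt; auto. apply sqd_nonneg. Qed.
Lemma rz_nonneg c z : 0 <= rz c z.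
Proof. apply sqrt_pos. Qed.

Lemma sqd_rep c z i s : length z = d -> (i < d)%nat ->
  sqd d c (replace_nth i (coord z i + s)%Z z) =
  sqd d c z + (2 * IZR s * IZR (coord z i - coord c i) + IZR s ^ 2).
Proof. intros Hl Hi. unfold sqd.
  rewrite (Rsum_update (fun j => IZR (coord c j - coord z j) ^ 2)
    (fun j => IZR (coord c j - coord (replace_nth i (coord z i + s)%Z z) j) ^ 2) (seq 0 d) i).
  rewrite coord_replace_same by lia. rewrite !minus_IZR, plus_IZR. ring.
  apply seq_NoDup. apply in_seq; lia. intros j Hj. rewrite coord_replace_other; auto. Qed.

Lemma v_bound c z i : (i < d)%nat -> IZR (coord z i - coord c i) ^ 2 <= rz c z ^ 2.
Proof. intros Hi. rewrite rz_sq. replace (IZR (coord z i - coord c i) ^ 2) with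
  (IZR (coord c i - coord z i) ^ 2) by (rewrite !minus_IZR; ring). apply sqd_coord; auto. Qed.

Lemma rz_nbr c z w : length z = d -> interior d N z -> In w (torus_nbrs d N z) ->
  rz c z - 1 <= rz c w <= rz c z + 1.
Proof. intros Hl Iz Hw. destruct (nbr_form z w Iz Hw) as [i [s [Hi [Hs ->]]]].
  pose proof (rz_sq c (replace_nth i (coord z i + s)%Z z)) as E.
  rewrite sqd_rep in E by auto. rewrite <- rz_sq in E.
  pose proof (v_bound c z i Hi). pose proof (rz_nonneg c z).
  pose proof (rz_nonneg c (replace_nth i (coord z i + s)%Z z)).
  assert (Hv := sq_le_bounds (IZR (coord z i - coord c i)) (rz c z) H0 H).
  set (W := rz c (replace_nth i (coord z i + s)%Z z)) in *.
  set (R0 := rz c z) in *. set (v := IZR (coord z i - coord c i)) in *.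
  assert (Hs' : IZR s = 1 \/ IZR s = -1) by (destruct Hs as [-> | ->]; [left|right]; reflexivity).
  assert (E2 : W ^ 2 = R0 ^ 2 + (2 * IZR s * v + 1)).
  { rewrite E. destruct Hs' as [-> | ->]; ring. }
  assert (U : W ^ 2 <= (R0 + 1) ^ 2).
  { rewrite E2. destruct Hs' as [-> | ->]; simpl; lra. }
  assert (Lw : (R0 - 1) ^ 2 <= W ^ 2).
  { rewrite E2. destruct Hs' as [-> | ->]; simpl; lra. }
  split.
  - destruct (Rle_dec (R0 - 1) 0). lra. pose proof (sq_le_bounds (R0 - 1) W H1 Lw). lra.
  - pose proof (sq_le_bounds W (R0 + 1) ltac:(lra) U). lra. Qed.

Hypothesis HT : INR d + 2 <= p.
Hypothesis Hrbig : 4 * INR d * (p + 2) <= r.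

Definition Tt := p - INR d.
Definition aa := 2 / Tt.
Definition bb := 2 * aa * INR d / r.
Definition phi u := aa * (u + 1) - bb * (u + 1) ^ 2.
Definition gfun c z := if Rle_dec Tt (rz c z - r) then 1 else Rmin 1 (phi (rz c z - r)).

Lemma consts : 2 <= Tt /\ 0 < aa /\ 0 < bb /\ 2 * bb * (Tt + 2) <= aa /\ INR d * aa / r = bb / 2
   /\ 1 <= r.
Proof. assert (Hd1 : 1 <= INR d) by (apply (le_INR 1); lia).
  assert (HTt : 2 <= Tt) by (unfold Tt; lra).
  assert (Ha : 0 < aa) by (unfold aa; apply Rdiv_lt_0_compat; lra).
  assert (Hb : 0 < bb).
  { unfold bb. apply Rdiv_lt_0_compat. apply Rmult_lt_0_compat; lra. lra. }
  assert (Hr4 : 4 * INR d * (Tt + 2) <= r).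
  { unfold Tt. apply Rle_trans with (4 * INR d * (p + 2)); auto.
    apply Rmult_le_compat_l. lra. lra. }
  assert (Hr1 : 1 <= r).
  { assert (4 * 1 <= 4 * INR d * (p + 2)) by (apply Rmult_le_compat; lra). lra. }
  assert (E1 : 2 * bb * (Tt + 2) = aa * (4 * INR d * (Tt + 2)) / r) by (unfold bb; field; lra).
  assert (E2 : aa * (4 * INR d * (Tt + 2)) / r <= aa * r / r).
  { unfold Rdiv. apply Rmult_le_compat_r. left; apply Rinv_0_lt_compat; lra.
    apply Rmult_le_compat_l; lra. }
  assert (E3 : aa * r / r = aa) by (field; lra).
  assert (E4 : INR d * aa / r = bb / 2) by (unfold bb; field; lra).
  split; [auto|split; [auto|split; [auto|split; [lra|split; auto]]]]. Qed.

Lemma phi_nonneg u : -1 <= u <= Tt + 1 -> 0 <= phi u.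
Proof. intros Hu. destruct consts as [H1 [H2 [H3 [H4 _]]]]. unfold phi.
  replace (aa * (u + 1) - bb * (u + 1) ^ 2) with ((u + 1) * (aa - bb * (u + 1))) by ring.
  assert (bb * (u + 1) <= bb * (Tt + 2)) by (apply Rmult_le_compat_l; lra).
  apply Rmult_le_pos; lra. Qed.

Lemma phi_ge1 u : Tt <= u <= Tt + 1 -> 1 <= phi u.
Proof. intros Hu. destruct consts as [H1 [H2 [H3 [H4 _]]]]. unfold phi.
  replace (aa * (u + 1) - bb * (u + 1) ^ 2) with ((u + 1) * (aa - bb * (u + 1))) by ring.
  assert (bb * (u + 1) <= bb * (Tt + 2)) by (apply Rmult_le_compat_l; lra).
  assert (aa / 2 <= aa - bb * (u + 1)) by lra.
  assert ((Tt + 1) * (aa / 2) <= (u + 1) * (aa - bb * (u + 1))) by (apply Rmult_le_compat; lra).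
  assert ((Tt + 1) * (aa / 2) = (Tt + 1) / Tt) by (unfold aa; field; lra).
  assert (1 <= (Tt + 1) / Tt). { apply (Rmult_le_reg_l Tt). lra.
    replace (Tt * ((Tt + 1) / Tt)) with (Tt + 1) by (field; lra). lra. }
  lra. Qed.

Lemma phi_le u : -1 <= u -> phi u <= aa * (u + 1).
Proof. intros Hu. destruct consts as [_ [_ [H3 _]]]. unfold phi.
  assert (0 <= bb * (u + 1) ^ 2) by (apply Rmult_le_pos; [lra|apply pow2_ge_0]). lra. Qed.

Lemma phi_sum_stop : True. Proof. exact I. Qed.
Lemma phi_sum c z : length z = d -> interior d N z -> r < rz c z -> rz c z - r < Tt ->
  Rsum_list (fun w => phi (rz c w - r)) (torus_nbrs d N z) <= 2 * INR d * phi (rz c z - r).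
Proof. intros Hl Iz Hr1 HT1. destruct consts as [HT2 [Ha [Hb [Hab [Hdab Hr1']]]]].
  set (rho := rz c z) in *.
  assert (Hrho1 : 1 <= rho) by lra.
  set (A := aa - 2 * bb * (rho - r + 1)).
  assert (HA : 0 <= A <= aa).
  { unfold A. split. assert (bb * (rho - r + 1) <= bb * (Tt + 2)) by (apply Rmult_le_compat_l; lra). lra.
    assert (0 <= bb * (rho - r + 1)) by (apply Rmult_le_pos; lra). lra. }
  assert (Hphi : forall rho', phi (rho' - r) = phi (rho - r) + (A * (rho' - rho) - bb * (rho' - rho) ^ 2)).
  { intros. unfold phi, A. ring. }
  rewrite Rsum_nbrs_interior by auto.
  apply Rle_trans with (Rsum_list (fun i => 2 * phi (rho - r) +
      (A / rho - 8 * bb * IZR (coord z i - coord c i) ^ 2 / (9 * rho ^ 2))) (seq 0 d)).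
  - apply Rsum_le_in. intros i Hi. apply in_seq in Hi.
    rewrite (Hphi (rz c (replace_nth i (coord z i + 1)%Z z))), (Hphi (rz c (replace_nth i (coord z i - 1)%Z z))).
    replace (coord z i - 1)%Z with (coord z i + -1)%Z by lia.
    assert (Ep : rz c (replace_nth i (coord z i + 1)%Z z) ^ 2 = rho ^ 2 + 2 * IZR (coord z i - coord c i) + 1).
    { rewrite rz_sq, sqd_rep by (auto; lia). unfold rho. rewrite rz_sq. simpl IZR. ring. }
    assert (Em : rz c (replace_nth i (coord z i + -1)%Z z) ^ 2 = rho ^ 2 - 2 * IZR (coord z i - coord c i) + 1).
    { rewrite rz_sq, sqd_rep by (auto; lia). unfold rho. rewrite rz_sq. simpl IZR. ring. }
    assert (Hb0 : 0 <= bb) by lra.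
    pose proof (pair_bound rho (IZR (coord z i - coord c i))
       (rz c (replace_nth i (coord z i + 1)%Z z)) (rz c (replace_nth i (coord z i + -1)%Z z)) A bb
       Hrho1 (v_bound c z i ltac:(lia)) (rz_nonneg _ _) (rz_nonneg _ _) Ep Em (proj1 HA) Hb0) as PB.
    lra.
  - rewrite Rsum_plus, Rsum_const, length_seq.
    rewrite (Rsum_ext_in _ (fun i => A / rho + (- (8 * bb / (9 * rho ^ 2))) * IZR (coord c i - coord z i) ^ 2)).
    2: { intros. rewrite !minus_IZR. field. lra. }
    rewrite Rsum_plus, Rsum_const, Rsum_scal, length_seq. fold (sqd d c z). rewrite <- rz_sq. fold rho.
    replace (- (8 * bb / (9 * rho ^ 2)) * rho ^ 2) with (- (8 * bb / 9)) by (field; lra).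
    assert (INR d * (A / rho) <= bb / 2).
    { rewrite <- Hdab. unfold Rdiv. rewrite <- Rmult_assoc.
      apply Rle_trans with (INR d * A * / r).
      apply Rmult_le_compat_l. apply Rmult_le_pos; [apply pos_INR|lra].
      apply Rinv_le_contravar; lra.
      rewrite Rmult_assoc, Rmult_assoc. apply Rmult_le_compat_l. apply pos_INR.
      apply Rmult_le_compat_r. left; apply Rinv_0_lt_compat; lra. lra. }
    lra.
Qed.

Lemma notB_rz c z : valid_center c -> In z (grid d N) -> ~ inB d N gam chi z -> r < rz c z.
Proof. intros Hc Hz HB. assert (r ^ 2 < sqd d c z).
  { destruct (Rlt_le_dec (r ^ 2) (sqd d c z)); auto. exfalso; apply HB. apply (center_inB c); auto. }
  unfold rz. rewrite <- (sqrt_pow2 r) by lra. apply sqrt_lt_1_alt. split; auto. apply pow2_ge_0. Qed.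

Lemma gfun_bounds c z : valid_center c -> In z (grid d N) -> ~ inB d N gam chi z ->
  0 <= gfun c z <= 1.
Proof. intros Hc Hz HB. pose proof (notB_rz c z Hc Hz HB). unfold gfun.
  destruct (Rle_dec Tt (rz c z - r)). lra. pose proof (phi_nonneg (rz c z - r) ltac:(lra)).
  split. apply Rmin_glb; lra. apply Rmin_l. Qed.

Lemma gfun_Delta c z : valid_center c -> In z (grid d N) -> ~ inB d N gam chi z ->
  inDelta d N gam chi z -> gfun c z = 1.
Proof. intros Hc Hz HB HD. pose proof (notB_rz c z Hc Hz HB).
  assert (r ^ 2 < sqd d c z).
  { rewrite <- rz_sq. assert (0 <= r) by lra. simpl. nra. }
  pose proof (far_Delta c z Hc Hz H0 HD). unfold gfun. destruct (Rle_dec Tt (rz c z - r)); auto.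
  exfalso. unfold Tt, rz in *. lra. Qed.

Lemma super c : valid_center c -> forall n z, In z (grid d N) -> ~ inB d N gam chi z ->
  esc_approx d N gam chi n z <= gfun c z.
Proof. intros Hc n. induction n; intros z Hz HB.
  - destruct (classic (inDelta d N gam chi z)) as [HD|HD].
    + rewrite esc_Delta, gfun_Delta; auto. lra.
    + rewrite esc_O by auto. apply gfun_bounds; auto.
  - destruct (classic (inDelta d N gam chi z)) as [HD|HD].
    + rewrite esc_Delta, gfun_Delta; auto. lra.
    + rewrite esc_S by auto.
      assert (Hd0 : 0 < INR d) by (apply lt_0_INR; lia).
      pose proof (notDelta_interior z Hz HD) as Iz.
      assert (Hl : length z = d) by (apply grid_length; auto).
      pose proof (notB_rz c z Hc Hz HB) as Hrz.
      assert (Hstep : Rsum_list (fun w => (1 - ind (inB d N gam chi w)) * esc_approx d N gam chi n w)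
                        (torus_nbrs d N z) <=
                      Rsum_list (fun w => (1 - ind (inB d N gam chi w)) * gfun c w) (torus_nbrs d N z)).
      { apply Rsum_le_in. intros w Hw. assert (Hwg : In w (grid d N)) by (eapply nbr_in_grid; eauto).
        destruct (classic (inB d N gam chi w)) as [HwB|HwB].
        - rewrite ind_true by auto. lra.
        - rewrite ind_false by auto. rewrite Rminus_0_r, !Rmult_1_l. apply IHn; auto. }
      assert (Hle1 : Rsum_list (fun w => (1 - ind (inB d N gam chi w)) * gfun c w) (torus_nbrs d N z) <=
                     2 * INR d).
      { replace (2 * INR d) with (INR (length (torus_nbrs d N z)) * 1)
          by (rewrite length_torus_nbrs, mult_INR; simpl; ring).
        rewrite <- Rsum_const. apply Rsum_le_in. intros w Hw.
        assert (Hwg : In w (grid d N)) by (eapply nbr_in_grid; eauto).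
        destruct (classic (inB d N gam chi w)) as [HwB|HwB].
        - rewrite ind_true by auto. lra.
        - rewrite ind_false by auto. rewrite Rminus_0_r, Rmult_1_l. apply gfun_bounds; auto. }
      assert (Hfin : forall X, 0 <= X <= 2 * INR d -> / (2 * INR d) * X <= 1).
      { intros X HX. apply (Rmult_le_reg_l (2 * INR d)). lra.
        rewrite <- Rmult_assoc, Rinv_r by lra. lra. }
      assert (Hnn : 0 <= Rsum_list (fun w => (1 - ind (inB d N gam chi w)) * esc_approx d N gam chi n w)
                        (torus_nbrs d N z)).
      { apply Rsum_nonneg. intros w _. pose proof (ind_01 (inB d N gam chi w)).
        pose proof (esc_bounds d N gam chi n w Hd). apply Rmult_le_pos; lra. }
      unfold gfun at 1. destruct (Rle_dec Tt (rz c z - r)) as [HT1|HT1].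
      * apply Hfin. lra.
      * apply Rmin_glb. apply Hfin. lra.
        assert (Hphi : Rsum_list (fun w => (1 - ind (inB d N gam chi w)) * gfun c w) (torus_nbrs d N z) <=
                       Rsum_list (fun w => phi (rz c w - r)) (torus_nbrs d N z)).
        { apply Rsum_le_in. intros w Hw. assert (Hwg : In w (grid d N)) by (eapply nbr_in_grid; eauto).
          pose proof (rz_nbr c z w Hl Iz Hw) as Hrw.
          destruct (classic (inB d N gam chi w)) as [HwB|HwB].
          - rewrite ind_true by auto. rewrite Rminus_diag, Rmult_0_l. apply phi_nonneg. lra.
          - rewrite ind_false by auto. rewrite Rminus_0_r, Rmult_1_l. unfold gfun.
            pose proof (notB_rz c w Hc Hwg HwB).
            destruct (Rle_dec Tt (rz c w - r)). apply phi_ge1; lra. apply Rmin_r. }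
        pose proof (phi_sum c z Hl Iz Hrz ltac:(lra)).
        apply (Rmult_le_reg_l (2 * INR d)). lra. rewrite <- Rmult_assoc, Rinv_r by lra. lra.
Qed.

Lemma h_upper x : In x (grid d N) -> inBdB d N gam chi x -> h x <= 2 * aa.
Proof. intros Hx [HxB _].
  assert (Hl : length x = d) by (apply grid_length; auto).
  set (c := cen x). assert (Hc : valid_center c) by (apply cen_valid; auto).
  assert (Hd0 : 0 < INR d) by (apply lt_0_INR; lia).
  destruct consts as [HT2 [Ha _]].
  assert (Hrx : rz c x <= r).
  { apply inB_iff in HxB as [_ HB]. unfold rz. rewrite <- (sqrt_pow2 r) by lra. apply sqrt_le_1_alt.
    eapply Rle_trans; [|apply HB]. right. apply Rsum_ext_in. intros j Hj. apply in_seq in Hj.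
    unfold c, cen. rewrite coord_map by lia. unfold fR. rewrite !minus_IZR. ring. }
  pose proof (inB_notDelta x HxB) as HxD. pose proof (inB_interior x HxB) as Ix.
  apply (cv_le_S _ _ _ (Hh x Hx)). intros n. rewrite esc_S by auto.
  apply (Rmult_le_reg_l (2 * INR d)). lra. rewrite <- Rmult_assoc, Rinv_r by lra. rewrite Rmult_1_l.
  replace (2 * INR d * (2 * aa)) with (INR (length (torus_nbrs d N x)) * (2 * aa))
    by (rewrite length_torus_nbrs, mult_INR; simpl; ring).
  rewrite <- Rsum_const. apply Rsum_le_in. intros w Hw.
  assert (Hwg : In w (grid d N)) by (eapply nbr_in_grid; eauto).
  destruct (classic (inB d N gam chi w)) as [HwB|HwB].
  - rewrite ind_true by auto. lra.
  - rewrite ind_false by auto. rewrite Rminus_0_r, Rmult_1_l.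
    pose proof (super c Hc n w Hwg HwB).
    pose proof (rz_nbr c x w Hl Ix Hw). pose proof (notB_rz c w Hc Hwg HwB).
    unfold gfun in H. destruct (Rle_dec Tt (rz c w - r)). lra.
    pose proof (Rmin_r 1 (phi (rz c w - r))). pose proof (phi_le (rz c w - r) ltac:(lra)).
    assert (aa * (rz c w - r + 1) <= aa * 2) by (apply Rmult_le_compat_l; lra). lra.
Qed.
End Geo.

Lemma exp_le' x y : x <= y -> exp x <= exp y.
Proof. intros [H|H]. left; apply exp_increasing; auto. right; subst; auto. Qed.
Lemma ln_le' x y : 0 < x -> x <= y -> ln x <= ln y.
Proof. intros Hx [H|H]. left; apply ln_increasing; auto. right; subst; auto. Qed.

Lemma eventually (gam K eps : R) : 0 < gam < 1 -> 0 < K -> 0 < eps ->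
  exists N0 : nat, forall N, (N0 <= N)%nat ->
    (0 < N)%nat /\ K <= Rpower (INR N) gam /\ Rpower (INR N) gam <= eps * INR N.
Proof. intros Hg HK He.
  set (M := Rmax (ln K / gam) (- ln eps / (1 - gam))).
  destruct (archimed (exp M)) as [H1 _].
  assert (Hpos : (0 < up (exp M))%Z) by (apply lt_IZR; pose proof (exp_pos M); lra).
  exists (Z.to_nat (up (exp M))). intros N HN.
  assert (HN0 : exp M <= INR N).
  { apply Rle_trans with (INR (Z.to_nat (up (exp M)))). rewrite INR_IZR_INZ, Z2Nat.id by lia. lra.
    apply le_INR; auto. }
  assert (HNp : 0 < INR N) by (pose proof (exp_pos M); lra).
  assert (HlnN : M <= ln (INR N)) by (rewrite <- (ln_exp M); apply ln_le'; auto; apply exp_pos).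
  assert (HM1 : ln K / gam <= M) by apply Rmax_l.
  assert (HM2 : - ln eps / (1 - gam) <= M) by apply Rmax_r.
  split; [apply INR_lt; simpl; lra|]. unfold Rpower. split.
  - rewrite <- (exp_ln K) at 1 by auto. apply exp_le'.
    assert (ln K <= gam * ln (INR N)).
    { apply Rle_trans with (gam * (ln K / gam)). right; field; lra.
      apply Rmult_le_compat_l; lra. }
    lra.
  - rewrite <- (exp_ln eps) by auto. rewrite <- (exp_ln (INR N)) at 2 by auto.
    rewrite <- exp_plus. apply exp_le'.
    assert (- ln eps <= (1 - gam) * ln (INR N)).
    { apply Rle_trans with ((1 - gam) * (- ln eps / (1 - gam))). right; field; lra.
      apply Rmult_le_compat_l; lra. }
    lra.
Qed.

Lemma rpow_main (x : R) (d : nat) (gam : R) : 0 < x -> (1 <= d)%nat ->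
  Rpower x (INR d - 1 - gam) = x ^ (d - 1) / Rpower x gam.
Proof. intros Hx Hd. replace (INR d - 1 - gam) with (INR (d - 1) + - gam)
    by (rewrite minus_INR by auto; simpl; ring).
  rewrite Rpower_plus, Rpower_pow, Rpower_Ropp by auto. reflexivity. Qed.

Lemma rpow_e (x : R) (d : nat) : 0 < x -> (1 <= d)%nat -> Rpower x (1 - INR d) = / x ^ (d - 1).
Proof. intros Hx Hd. replace (1 - INR d) with (- INR (d - 1)) by (rewrite minus_INR by auto; simpl; ring).
  rewrite Rpower_Ropp, Rpower_pow by auto. reflexivity. Qed.

Theorem lemma5p1 (d : nat) (gam chi : R) :
  (3 <= d)%nat ->
  / (INR d - 1) < gam < 1 ->
  0 < chi < / 4 ->
  exists c : R, 0 < c < 1 /\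
  exists N0 : nat, forall N : nat, (N0 <= N)%nat ->
  forall h : list Z -> R,
    (forall x, In x (grid d N) ->
       Un_cv (fun n => esc_approx d N gam chi n x) (h x)) ->
    (c * Rpower (INR N) (INR d - 1 - gam) <= capD d N gam chi h
     <= / c * Rpower (INR N) (INR d - 1 - gam)) /\
    (forall x, In x (grid d N) -> inBdB d N gam chi x ->
       c * Rpower (INR N) (1 - INR d) <= ebarD d N gam chi h x
       <= / c * Rpower (INR N) (1 - INR d)).
Proof.
  intros Hd3 Hgam Hchi.
  set (D := INR d). set (F := 4 ^ (d - 1)).
  assert (HD3 : 3 <= D) by (unfold D; replace 3 with (INR 3) by (simpl; ring); apply le_INR; auto).
  assert (HF1 : 1 <= F) by (unfold F; apply pow_R1_Rle; lra).
  assert (HD4 : 1 <= D ^ 4) by (apply pow_R1_Rle; lra).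
  assert (HD3' : 1 <= D ^ 3) by (apply pow_R1_Rle; lra).
  assert (Hg0 : 0 < gam).
  { apply Rlt_trans with (/ (D - 1)). apply Rinv_0_lt_compat; lra. unfold D; lra. }
  set (c := / (512 * F * D ^ 4)).
  assert (Hden : 1 <= 512 * F * D ^ 4).
  { assert (1 <= F * D ^ 4) by (replace 1 with (1 * 1) by ring; apply Rmult_le_compat; lra). lra. }
  assert (Hc : 0 < c < 1).
  { unfold c. split. apply Rinv_0_lt_compat; lra. rewrite <- Rinv_1. apply Rinv_lt_contravar; try lra.
    assert (1 <= F * D ^ 4) by (replace 1 with (1 * 1) by ring; apply Rmult_le_compat; lra). lra. }
  exists c. split; auto.
  destruct (eventually gam (2 * D + 4) (chi / (16 * D)) (conj Hg0 (proj2 Hgam)) ltac:(lra)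
     ltac:(apply Rdiv_lt_0_compat; lra)) as [N0 HN0].
  exists N0. intros N HN h Hh.
  destruct (HN0 N HN) as [HNpos [Hp1 Hp2]].
  set (p := Rpower (INR N) gam) in *. set (r := chi * INR N).
  assert (HNr : 0 < INR N) by (apply lt_0_INR; auto).
  assert (Hr : 0 < r) by (unfold r; nra).
  assert (H16 : 16 * D * p <= r).
  { unfold r. apply Rle_trans with (16 * D * (chi / (16 * D) * INR N)).
    apply Rmult_le_compat_l; lra. right. field. lra. }
  assert (Hp : 2 < p) by lra.
  assert (HT : D + 2 <= p) by lra.
  assert (Hrbig : 4 * D * (p + 2) <= r).
  { apply Rle_trans with (16 * D * p); auto. nra. }
  assert (HL : Lpar N gam chi = 2 * p + r) by reflexivity.
  set (L := Lpar N gam chi) in *.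
  destruct (ceil_ex L) as [lo Hlo0]. destruct (floor_ex (INR N - L)) as [hi Hhi0].
  assert (Hlo : forall c0 : Z, L <= IZR c0 <-> (lo <= c0)%Z).
  { intros c0. split; intros H.
    - assert (IZR lo - 1 < IZR c0) by lra. assert (IZR (lo - 1) < IZR c0) by (rewrite minus_IZR; lra).
      apply lt_IZR in H1. lia.
    - apply IZR_le in H. lra. }
  assert (Hhi : forall c0 : Z, IZR c0 <= INR N - L <-> (c0 <= hi)%Z).
  { intros c0. split; intros H.
    - assert (IZR c0 < IZR hi + 1) by lra. assert (IZR c0 < IZR (hi + 1)) by (rewrite plus_IZR; lra).
      apply lt_IZR in H1. lia.
    - apply IZR_le in H. lra. }
  assert (Hwidth : INR N / 4 <= IZR (hi - lo + 1)).
  { rewrite plus_IZR, minus_IZR.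
    assert (r <= INR N / 4) by (unfold r; nra).
    assert (16 * 3 * p <= 16 * D * p) by nra.
    rewrite HL in Hlo0, Hhi0. lra. }
  assert (Hlohi : (lo <= hi)%Z).
  { assert (0 < IZR (hi - lo + 1)) by lra. apply lt_IZR in H. lia. }
  destruct (floor_ex r) as [R0 HR0].
  assert (Hd0 : (0 < d)%nat) by lia.
  set (K := Rsum_list (fun x => ind (inBdB d N gam chi x)) (grid d N)).
  assert (Kup : K <= 2 * D * INR N ^ (d - 1)).
  { apply (count_bd_upper d N gam chi lo hi Hd0 HNpos Hr Hp HL Hlo Hhi Hlohi). }
  assert (Klow : IZR (hi - lo + 1) ^ (d - 1) <= K).
  { apply (count_bd_lower d N gam chi lo hi Hd0 HNpos Hr Hp HL Hlo Hhi Hlohi (d - 1) R0); auto. lia. }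
  set (Q := INR N ^ (d - 1)) in *.
  assert (HQ : 0 < Q) by (apply pow_lt; auto).
  assert (KlowQ : Q / F <= K).
  { eapply Rle_trans; [|apply Klow]. apply Rle_trans with ((INR N / 4) ^ (d - 1)).
    right. unfold Rdiv, Q, F. rewrite Rpow_mult_distr, pow_inv. reflexivity.
    apply pow_incr. split; [|auto]. lra. }
  set (hl := / (8 * D ^ 3 * p)). set (hu := 8 / p).
  assert (Hhl : forall x, In x (grid d N) -> inBdB d N gam chi x -> hl <= h x).
  { intros x Hx Hb. eapply Rle_trans; [|apply (h_lower d N gam chi lo hi Hd0 HNpos Hr Hp HL Hlo Hhi Hlohi h Hh x Hx Hb)].
    unfold hl. fold D. assert (H4 : 0 < 4 * D ^ 3) by (apply Rmult_lt_0_compat; [lra|apply pow_lt; lra]).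
    fold p. apply Rinv_le_contravar. nra. nra. }
  assert (Hhu : forall x, In x (grid d N) -> inBdB d N gam chi x -> h x <= hu).
  { intros x Hx Hb. eapply Rle_trans; [apply (h_upper d N gam chi lo hi Hd0 HNpos Hr Hp HL Hlo Hhi Hlohi h Hh HT Hrbig x Hx Hb)|].
    unfold aa, Tt, hu. fold p. fold D. apply (Rmult_le_reg_l (p * (p - D))). nra.
    unfold Rdiv. replace (p * (p - D) * (2 * (2 * / (p - D)))) with (4 * p) by (field; lra).
    replace (p * (p - D) * (8 * / p)) with (8 * (p - D)) by (field; lra). lra. }
  assert (Hhl0 : 0 < hl).
  { unfold hl. apply Rinv_0_lt_compat. apply Rmult_lt_0_compat; [|lra].
    apply Rmult_lt_0_compat; [lra|apply pow_lt; lra]. }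
  assert (Hcap1 : hl * K <= capD d N gam chi h).
  { unfold K, capD. rewrite <- Rsum_scal. apply Rsum_le_in. intros x Hx.
    destruct (classic (inBdB d N gam chi x)) as [Hb|Hb].
    - rewrite !ind_true by auto. rewrite Rmult_1_r, Rmult_1_l. auto.
    - rewrite !ind_false by auto. lra. }
  assert (Hcap2 : capD d N gam chi h <= hu * K).
  { unfold K, capD. rewrite <- Rsum_scal. apply Rsum_le_in. intros x Hx.
    destruct (classic (inBdB d N gam chi x)) as [Hb|Hb].
    - rewrite !ind_true by auto. rewrite Rmult_1_r, Rmult_1_l. auto.
    - rewrite !ind_false by auto. lra. }
  set (X := Q / p).
  assert (HX : 0 < X) by (unfold X; apply Rdiv_lt_0_compat; lra).
  assert (Hhu0 : 0 < hu) by (unfold hu; apply Rdiv_lt_0_compat; lra).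
  assert (CapLo : X / (8 * D ^ 3 * F) <= capD d N gam chi h).
  { eapply Rle_trans; [|apply Hcap1]. apply Rle_trans with (hl * (Q / F)).
    right. unfold X, hl. field. repeat split; lra.
    apply Rmult_le_compat_l; lra. }
  assert (CapHi : capD d N gam chi h <= 16 * D * X).
  { eapply Rle_trans; [apply Hcap2|]. apply Rle_trans with (hu * (2 * D * Q)).
    apply Rmult_le_compat_l; lra. right. unfold hu, X. field. lra. }
  assert (HD3pos : 0 < D ^ 3) by (apply pow_lt; lra).
  assert (Hcap0 : 0 < capD d N gam chi h).
  { eapply Rlt_le_trans; [|apply CapLo]. apply Rdiv_lt_0_compat; auto.
    apply Rmult_lt_0_compat; lra. }
  assert (Hc1 : c <= / (8 * D ^ 3 * F)).
  { unfold c. apply Rinv_le_contravar. apply Rmult_lt_0_compat; lra.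
    replace (512 * F * D ^ 4) with ((8 * D ^ 3 * F) * (64 * D)) by ring.
    assert (0 < 8 * D ^ 3 * F) by (apply Rmult_lt_0_compat; lra). nra. }
  assert (Hc2 : 16 * D <= / c).
  { unfold c. rewrite Rinv_inv. replace (512 * F * D ^ 4) with ((16 * D) * (32 * F * D ^ 3)) by ring.
    assert (1 <= 32 * F * D ^ 3) by nra. nra. }
  assert (Hc3 : c <= / (128 * D ^ 4)).
  { unfold c. apply Rinv_le_contravar. nra. nra. }
  assert (Hc4 : 64 * D ^ 3 * F <= / c).
  { unfold c. rewrite Rinv_inv. replace (512 * F * D ^ 4) with ((64 * D ^ 3 * F) * (8 * D)) by ring.
    assert (0 < 64 * D ^ 3 * F) by nra. nra. }
  unfold D. rewrite rpow_main by (auto; lia). rewrite rpow_e by (auto; lia). fold D. fold p. fold Q. fold X.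
  split.
  - split.
    + eapply Rle_trans; [|apply CapLo]. unfold Rdiv. rewrite Rmult_comm.
      apply Rmult_le_compat_l; lra.
    + eapply Rle_trans; [apply CapHi|]. apply Rmult_le_compat_r; lra.
  - intros x Hx Hb. unfold ebarD. rewrite ind_true by auto. rewrite Rmult_1_l.
    pose proof (Hhl x Hx Hb). pose proof (Hhu x Hx Hb).
    split.
    + apply Rle_trans with (hl / (16 * D * X)).
      * unfold hl, X. replace (/ (8 * D ^ 3 * p) / (16 * D * (Q / p))) with (/ (128 * D ^ 4) * / Q)
          by (field; repeat split; lra).
        apply Rmult_le_compat_r. left; apply Rinv_0_lt_compat; auto. auto.
      * unfold Rdiv. apply Rmult_le_compat.
        -- lra.
        -- left; apply Rinv_0_lt_compat. apply Rmult_lt_0_compat; lra.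
        -- auto.
        -- apply Rinv_le_contravar; auto.
    + apply Rle_trans with (hu / (X / (8 * D ^ 3 * F))).
      * unfold Rdiv. apply Rmult_le_compat.
        -- pose proof (h_bounds d N gam chi h Hd0 Hh x Hx); lra.
        -- left; apply Rinv_0_lt_compat; auto.
        -- auto.
        -- apply Rinv_le_contravar; auto. apply Rmult_lt_0_compat; auto.
           apply Rinv_0_lt_compat. apply Rmult_lt_0_compat; lra.
      * unfold hu, X. replace (8 / p / (Q / p / (8 * D ^ 3 * F))) with ((64 * D ^ 3 * F) * / Q)
          by (field; repeat split; lra).
        apply Rmult_le_compat_r. left; apply Rinv_0_lt_compat; auto. auto.
Qed.
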